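(* If a nested sequent $\Gamma$ is derivable in $\mathsf{N.IntCK}\cup\{\mathsf{cut}\}$, then $\Gamma$ is derivable in $\mathsf{N.IntCK}$.
   Context: Language $\mathcal{L}$: formulas $\varphi ::= p \mid \bot \mid \varphi\wedge\varphi \mid \varphi\vee\varphi \mid \varphi\to\varphi \mid \varphi \mathrel{\Box\!\!\to} \varphi \mid \varphi \mathrel{\Diamond\!\!\to}\varphi$. Nested sequents: each formula $\varphi$ gets an input polarity $\varphi^\bullet$ or output polarity $\varphi^\circ$. Input sequents $\Lambda ::= \emptyset \mid \Lambda,\varphi^\bullet \mid \Lambda,[\psi:\Lambda]$ and nested sequents $\Gamma ::= \Lambda,\varphi^\circ \mid \Lambda,[\psi:\Gamma]$, where the index $\psi$ of a component $[\psi:\cdot]$ is an unpolarised formula; a nested sequent contains exactly one output formula (commas are associative and commutative). A context $\Gamma\{\ \}$ is a sequent with one hole $\{\ \}$ (possibly inside nested components), to be filled with a sequent; rules are applied only when premisses and conclusion are nested sequents. $\Gamma^{\downarrow}\{\ \}$ denotes $\Gamma\{\ \}$ with its output formula removed. Rules of $\mathsf{N.IntCK}$ (premisses / conclusion): init: $\Gamma\{p^\bullet,p^\circ\}$ ($p$ atom, no premiss); $\bot^\bullet$: $\Gamma\{\bot^\bullet\}$ (no premiss); $\wedge^\bullet$: $\Gamma\{\varphi^\bullet,\psi^\bullet\}$ / $\Gamma\{(\varphi\wedge\psi)^\bullet\}$; $\wedge^\circ$: $\Gamma\{\varphi^\circ\}$, $\Gamma\{\psi^\circ\}$ / $\Gamma\{(\varphi\wedge\psi)^\circ\}$;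 $\vee^\bullet$: $\Gamma\{\varphi^\bullet\}$, $\Gamma\{\psi^\bullet\}$ / $\Gamma\{(\varphi\vee\psi)^\bullet\}$; $\vee^\circ$: $\Gamma\{\varphi^\circ\}$ / $\Gamma\{(\varphi\vee\psi)^\circ\}$ and $\Gamma\{\psi^\circ\}$ / $\Gamma\{(\varphi\vee\psi)^\circ\}$; $\to^\bullet$: $\Gamma^\downarrow\{(\varphi\to\psi)^\bullet,\varphi^\circ\}$, $\Gamma\{\psi^\bullet\}$ / $\Gamma\{(\varphi\to\psi)^\bullet\}$; $\to^\circ$: $\Gamma\{\varphi^\bullet,\psi^\circ\}$ / $\Gamma\{(\varphi\to\psi)^\circ\}$; $\Box^\bullet$: $\varphi^\bullet,\eta^\circ$ and $\eta^\bullet,\varphi^\circ$ and $\Gamma\{(\varphi\mathrel{\Box\!\!\to}\psi)^\bullet,[\eta:\psi^\bullet,\Delta]\}$ / $\Gamma\{(\varphi\mathrel{\Box\!\!\to}\psi)^\bullet,[\eta:\Delta]\}$; $\Box^\circ$: $\Gamma\{[\varphi:\psi^\circ]\}$ / $\Gamma\{(\varphi\mathrel{\Box\!\!\to}\psi)^\circ\}$; $\Diamond^\bullet$: $\Gamma\{[\varphi:\psi^\bullet]\}$ / $\Gamma\{(\varphi\mathrel{\Diamond\!\!\to}\psi)^\bullet\}$; $\Diamond^\circ$: $\varphi^\bullet,\eta^\circ$ and $\eta^\bullet,\varphi^\circ$ and $\Gamma\{[\eta:\psi^\circ,\Delta]\}$ / $\Gamma\{(\varphi\mathrel{\Diamond\!\!\to}\psi)^\circ,[\eta:\Delta]\}$.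 A derivation is a finite tree of rule instances whose leaves are instances of init or $\bot^\bullet$. The cut rule $\mathsf{cut}$: from premisses $\Gamma^{\downarrow}\{\xi^\circ\}$ and $\Gamma\{\xi^\bullet\}$ infer $\Gamma\{\emptyset\}$ (the hole filled with the empty sequent), for any formula $\xi$ and context $\Gamma\{\ \}$ for which these are nested sequents. *)

(* Defs.v *)
From Stdlib Require Import List.
Import ListNotations.

Inductive form : Type :=
| Var : nat -> form
| Bot : form
| And : form -> form -> form
| Or  : form -> form -> form
| Imp : form -> form -> form
| Box : form -> form -> form
| Dia : form -> form -> form.

(* Items of a (possibly ill-formed) nested sequent:
   an input formula phi^bullet, an output formula phi^circ, or a
   component [psi : Delta] indexed by an unpolarised formula psi. *)
Inductive item : Type :=
| IIn   : form -> item
| IOut  : form -> item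
| IComp : form -> list item -> item.

Definition seqnt := list item.

Fixpoint nouts_item (i : item) : nat :=
  match i with
  | IIn _ => 0
  | IOut _ => 1
  | IComp _ u =>
      (fix go (l : list item) : nat :=
         match l with [] => 0 | j :: t => nouts_item j + go t end) u
  end.

Definition nouts (s : seqnt) : nat :=
  fold_right (fun i n => nouts_item i + n) 0 s.

(* A nested sequent contains exactly one output formula (input sequents
   contain none); the grammar of the paper generates exactly these. *)
Definition nested (s : seqnt) : Prop := nouts s = 1.

(* Commas are associative and commutative: sequents are identified up to
   reordering at every nesting depth. *)
Inductive seq_equiv : seqnt -> seqnt -> Prop :=
| se_nil : seq_equiv [] []
| se_cons i j l1 l2 : item_equiv i j -> seq_equiv l1 l2 -> seq_equiv (i :: l1) (j :: l2)
| se_swap x y l : seq_equiv (x :: y :: l) (y :: x :: l)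
| se_trans l1 l2 l3 : seq_equiv l1 l2 -> seq_equiv l2 l3 -> seq_equiv l1 l3
with item_equiv : item -> item -> Prop :=
| ie_in f : item_equiv (IIn f) (IIn f)
| ie_out f : item_equiv (IOut f) (IOut f)
| ie_comp f s t : seq_equiv s t -> item_equiv (IComp f s) (IComp f t).

(* Contexts: a sequent with exactly one hole, possibly inside components.
   Hole D   denotes   D, { }
   Down D psi c  denotes  D, [psi : c]. *)
Inductive ctx : Type :=
| Hole : seqnt -> ctx
| Down : seqnt -> form -> ctx -> ctx.

Fixpoint fill (c : ctx) (X : seqnt) : seqnt :=
  match c with
  | Hole D => D ++ X
  | Down D psi c' => D ++ [IComp psi (fill c' X)]
  end.

Fixpoint strip_item (i : item) : list item :=
  match i with
  | IIn f => [IIn f]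
  | IOut _ => []
  | IComp psi u =>
      [IComp psi ((fix go (l : list item) : list item :=
                     match l with [] => [] | j :: t => strip_item j ++ go t end) u)]
  end.

Definition strip (s : seqnt) : seqnt := flat_map strip_item s.

Fixpoint down (c : ctx) : ctx :=
  match c with
  | Hole D => Hole (strip D)
  | Down D psi c' => Down (strip D) psi (down c')
  end.

Inductive intck_rule : list seqnt -> seqnt -> Prop :=
| r_init c p :
    intck_rule [] (fill c [IIn (Var p); IOut (Var p)])
| r_bot c :
    intck_rule [] (fill c [IIn Bot])
| r_andL c f g :
    intck_rule [fill c [IIn f; IIn g]] (fill c [IIn (And f g)])
| r_andR c f g :
    intck_rule [fill c [IOut f]; fill c [IOut g]] (fill c [IOut (And f g)])
| r_orL c f g :
    intck_rule [fill c [IIn f]; fill c [IIn g]] (fill c [IIn (Or f g)])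
| r_orR1 c f g :
    intck_rule [fill c [IOut f]] (fill c [IOut (Or f g)])
| r_orR2 c f g :
    intck_rule [fill c [IOut g]] (fill c [IOut (Or f g)])
| r_impL c f g :
    intck_rule [fill (down c) [IIn (Imp f g); IOut f]; fill c [IIn g]]
               (fill c [IIn (Imp f g)])
| r_impR c f g :
    intck_rule [fill c [IIn f; IOut g]] (fill c [IOut (Imp f g)])
| r_boxL c f g e D :
    intck_rule [[IIn f; IOut e]; [IIn e; IOut f];
                fill c [IIn (Box f g); IComp e (IIn g :: D)]]
               (fill c [IIn (Box f g); IComp e D])
| r_boxR c f g :
    intck_rule [fill c [IComp f [IOut g]]] (fill c [IOut (Box f g)])
| r_diaL c f g :
    intck_rule [fill c [IComp f [IIn g]]] (fill c [IIn (Dia f g)])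
| r_diaR c f g e D :
    intck_rule [[IIn f; IOut e]; [IIn e; IOut f];
                fill c [IComp e (IOut g :: D)]]
               (fill c [IOut (Dia f g); IComp e D]).

Inductive cut_rule : list seqnt -> seqnt -> Prop :=
| r_cut c xi :
    cut_rule [fill (down c) [IOut xi]; fill c [IIn xi]] (fill c []).

Definition intck_cut_rule (prems : list seqnt) (concl : seqnt) : Prop :=
  intck_rule prems concl \/ cut_rule prems concl.

Inductive derivable (R : list seqnt -> seqnt -> Prop) : seqnt -> Prop :=
| der_rule prems concl :
    R prems concl ->
    nested concl ->
    (forall p, List.In p prems -> nested p) ->
    (forall p, List.In p prems -> derivable R p) ->
    derivable R concl
| der_equiv s t :
    seq_equiv s t -> derivable R s -> derivable R t.

(* Main.v *)
Require Import Defs.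
From Stdlib Require Import List Permutation Lia.
Import ListNotations.

Scheme seq_equiv_ind2 := Induction for seq_equiv Sort Prop
with item_equiv_ind2 := Induction for item_equiv Sort Prop.

Notation "s ~~ t" := (seq_equiv s t) (at level 70).

Section ItemInd.
Variable P : item -> Prop.
Variable Q : seqnt -> Prop.
Hypothesis HIn : forall f, P (IIn f).
Hypothesis HOut : forall f, P (IOut f).
Hypothesis HComp : forall f u, Q u -> P (IComp f u).
Hypothesis Hnil : Q [].
Hypothesis Hcons : forall i l, P i -> Q l -> Q (i :: l).
Fixpoint item_ind2 (i : item) : P i :=
  match i with
  | IIn f => HIn f
  | IOut f => HOut f
  | IComp f u => HComp f u ((fix go (l : list item) : Q l :=
       match l with [] => Hnil | j :: t => Hcons j t (item_ind2 j) (go t) end) u)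
  end.
Lemma seq_ind2 : forall l, Q l.
Proof. induction l; auto using item_ind2. Qed.
End ItemInd.

Lemma equiv_refl_both : (forall i, item_equiv i i) /\ (forall l, l ~~ l).
Proof.
  assert (H : forall l, l ~~ l).
  { apply (seq_ind2 (fun i => item_equiv i i)); intros; constructor; auto. }
  split; auto. intros [f|f|f u]; constructor; auto.
Qed.
Lemma eqv_refl l : l ~~ l. Proof. apply equiv_refl_both. Qed.
Lemma ie_refl i : item_equiv i i. Proof. apply equiv_refl_both. Qed.
#[export] Hint Resolve eqv_refl ie_refl : core.

Lemma equiv_sym_both : (forall l1 l2, l1 ~~ l2 -> l2 ~~ l1) /\ (forall i j, item_equiv i j -> item_equiv j i).
Proof.
  assert (H : forall l1 l2, l1 ~~ l2 -> l2 ~~ l1).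
  { apply (seq_equiv_ind2 (fun l1 l2 _ => l2 ~~ l1) (fun i j _ => item_equiv j i)); intros.
    - constructor.
    - constructor; auto.
    - apply se_swap.
    - eapply se_trans; eauto.
    - constructor. - constructor. - constructor; auto. }
  split; auto. intros i j Hij; inversion Hij; constructor; auto.
Qed.
Lemma eqv_sym l1 l2 : l1 ~~ l2 -> l2 ~~ l1. Proof. apply equiv_sym_both. Qed.
Lemma ie_sym i j : item_equiv i j -> item_equiv j i. Proof. apply equiv_sym_both. Qed.
Lemma eqv_trans l1 l2 l3 : l1 ~~ l2 -> l2 ~~ l3 -> l1 ~~ l3. Proof. apply se_trans. Qed.
Lemma ie_trans i j k : item_equiv i j -> item_equiv j k -> item_equiv i k.
Proof. intros H1 H2; inversion H1; subst; inversion H2; subst; constructor; eauto using eqv_trans. Qed.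

Lemma eqv_perm l1 l2 : Permutation l1 l2 -> l1 ~~ l2.
Proof. induction 1. constructor. constructor; auto. apply se_swap. eapply se_trans; eauto. Qed.

Lemma eqv_app_r l b1 b2 : b1 ~~ b2 -> l ++ b1 ~~ l ++ b2.
Proof. induction l; simpl; auto. constructor; auto. Qed.

Lemma eqv_app a1 a2 b1 b2 : a1 ~~ a2 -> b1 ~~ b2 -> a1 ++ b1 ~~ a2 ++ b2.
Proof.
  intros H; revert b1 b2; induction H; intros b1 b2 Hb; simpl.
  - auto.
  - constructor; auto.
  - eapply se_trans; [apply se_swap|]. constructor; auto. constructor; auto. apply eqv_app_r; auto.
  - eapply se_trans; [apply IHseq_equiv1; eauto|]. apply IHseq_equiv2; auto.
Qed.

Lemma eqv_cons i j a b : item_equiv i j -> a ~~ b -> i :: a ~~ j :: b.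
Proof. constructor; auto. Qed.

Lemma eqv_app_comm a b : a ++ b ~~ b ++ a.
Proof. apply eqv_perm, Permutation_app_comm. Qed.

Lemma eqv_F2 l1 l2 : Forall2 item_equiv l1 l2 -> l1 ~~ l2.
Proof. induction 1; constructor; auto. Qed.

Lemma F2_perm_commute (R : item -> item -> Prop) l m m' :
  Forall2 R l m -> Permutation m m' -> exists l', Permutation l l' /\ Forall2 R l' m'.
Proof.
  intros HF HP; revert l HF; induction HP; intros.
  - exists l; auto.
  - inversion HF; subst. destruct (IHHP _ H3) as [l'' [? ?]]. exists (x0 :: l''); auto.
  - inversion HF as [|a b l1 m1 Ha Hr]; subst. inversion Hr as [|c d l2 m2 Hc Hr2]; subst.
    exists (c :: a :: l2). split; [constructor|]; auto.
  - destruct (IHHP1 _ HF) as [l1 [? ?]]. destruct (IHHP2 _ H0) as [l2 [? ?]].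
    exists l2; split; eauto using Permutation_trans.
Qed.

Lemma F2_trans l1 l2 l3 : Forall2 item_equiv l1 l2 -> Forall2 item_equiv l2 l3 -> Forall2 item_equiv l1 l3.
Proof.
  intros H; revert l3; induction H; intros l3 H'; inversion H'; subst; constructor; eauto using ie_trans.
Qed.

Lemma eqv_char l1 l2 : l1 ~~ l2 <-> exists u, Permutation l1 u /\ Forall2 item_equiv u l2.
Proof.
  split.
  - induction 1.
    + exists []; auto.
    + destruct IHseq_equiv as [u [? ?]]. exists (i :: u); auto.
    + exists (y :: x :: l); split; [constructor|]. repeat constructor; auto.
      clear. induction l; constructor; auto.
    + destruct IHseq_equiv1 as [u1 [? ?]]. destruct IHseq_equiv2 as [u2 [? ?]].
      destruct (F2_perm_commute _ _ _ _ H2 H3) as [u3 [? ?]].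
      exists u3; split; eauto using Permutation_trans, F2_trans.
  - intros [u [? ?]]. eapply se_trans; [apply eqv_perm; eauto| apply eqv_F2; auto].
Qed.

Lemma perm_cross (A B C E : list item) : Permutation (A ++ B) (C ++ E) ->
  exists A1 A2 B1 B2, Permutation A (A1 ++ A2) /\ Permutation B (B1 ++ B2) /\
    Permutation C (A1 ++ B1) /\ Permutation E (A2 ++ B2).
Proof.
  revert A B E; induction C as [|y C IH]; intros A B E HP.
  - exists [], A, [], B; simpl in *; repeat split; auto using Permutation_refl, Permutation_sym.
  - simpl in HP.
    assert (Hin : In y (A ++ B)) by (apply (Permutation_in y (Permutation_sym HP)); left; auto).
    apply in_app_or in Hin as [Hin|Hin].
    + apply in_split in Hin as [a1 [a2 ->]].
      assert (HP' : Permutation ((a1 ++ a2) ++ B) (C ++ E)).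
      { apply Permutation_cons_inv with y.
        eapply Permutation_trans; [|apply HP]. rewrite <- !app_assoc. simpl.
        apply Permutation_middle. }
      destruct (IH _ _ _ HP') as [A1 [A2 [B1 [B2 [H1 [H2 [H3 H4]]]]]]].
      exists (y :: A1), A2, B1, B2; repeat split; auto.
      * eapply Permutation_trans; [apply Permutation_sym, Permutation_middle|]. simpl; constructor; auto.
      * simpl; constructor; auto.
    + apply in_split in Hin as [b1 [b2 ->]].
      assert (HP' : Permutation (A ++ (b1 ++ b2)) (C ++ E)).
      { apply Permutation_cons_inv with y.
        eapply Permutation_trans; [|apply HP].
        eapply Permutation_trans; [apply Permutation_middle|].
        apply Permutation_app_head. apply Permutation_middle. }
      destruct (IH _ _ _ HP') as [A1 [A2 [B1 [B2 [H1 [H2 [H3 H4]]]]]]].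
      exists A1, A2, (y :: B1), B2; repeat split; auto.
      * eapply Permutation_trans; [apply Permutation_sym, Permutation_middle|]. simpl; constructor; auto.
      * simpl. eapply Permutation_trans; [|apply Permutation_middle]. constructor; auto.
Qed.

Lemma eqv_cross (A B C E : seqnt) : A ++ B ~~ C ++ E ->
  exists A1 A2 B1 B2, A ~~ A1 ++ A2 /\ B ~~ B1 ++ B2 /\ C ~~ A1 ++ B1 /\ E ~~ A2 ++ B2.
Proof.
  intros H. apply eqv_char in H as [u [HP HF]].
  apply Forall2_app_inv_r in HF as [u1 [u2 [HF1 [HF2 ->]]]].
  destruct (perm_cross _ _ _ _ HP) as [A1 [A2 [B1 [B2 [H1 [H2 [H3 H4]]]]]]].
  exists A1, A2, B1, B2; repeat split; try (apply eqv_perm; assumption).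
  - eapply se_trans; [apply eqv_sym, eqv_F2; eassumption | apply eqv_perm; assumption].
  - eapply se_trans; [apply eqv_sym, eqv_F2; eassumption | apply eqv_perm; assumption].
Qed.

Lemma eqv_nil_l l : [] ~~ l -> l = [].
Proof. intros H; apply eqv_char in H as [u [HP HF]]. apply Permutation_nil in HP; subst. inversion HF; auto. Qed.
Lemma eqv_nil_r l : l ~~ [] -> l = [].
Proof. intros H; apply eqv_nil_l, eqv_sym; auto. Qed.

Lemma eqv_cons_inv x l m : x :: l ~~ m ->
  exists m1 y m2, m = m1 ++ y :: m2 /\ item_equiv x y /\ l ~~ m1 ++ m2.
Proof.
  intros H; apply eqv_char in H as [u [HP HF]].
  assert (Hin : In x u) by (eapply Permutation_in; eauto; left; auto).
  apply in_split in Hin as [u1 [u2 ->]].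
  apply Permutation_cons_app_inv in HP.
  apply Forall2_app_inv_l in HF as [v1 [v2 [HF1 [HF2 ->]]]].
  inversion HF2 as [|a y b v2' Hxy HF3]; subst.
  exists v1, y, v2'; repeat split; auto.
  eapply eqv_trans; [apply eqv_perm; eauto|]. apply eqv_F2. apply Forall2_app; auto.
Qed.

Lemma eqv_cons_app x l A B : x :: l ~~ A ++ B ->
  (exists A1 y A2, A = A1 ++ y :: A2 /\ item_equiv x y /\ l ~~ A1 ++ A2 ++ B) \/
  (exists B1 y B2, B = B1 ++ y :: B2 /\ item_equiv x y /\ l ~~ A ++ B1 ++ B2).
Proof.
  intros H; apply eqv_cons_inv in H as [m1 [y [m2 [E [Hxy Hl]]]]].
  apply app_eq_app in E as [w [[E1 E2]|[E1 E2]]].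
  -
    destruct w as [|z w].
    + simpl in E2. subst. rewrite app_nil_r in *. right. exists [], y, m2; simpl; repeat split; auto.
    + inversion E2; subst. left. exists m1, z, w; repeat split; auto; rewrite <- ?app_assoc; auto.
  -
    subst. right. exists w, y, m2; repeat split; auto. rewrite app_assoc; auto.
Qed.

Definition form_eq_dec (f g : form) : {f = g} + {f <> g}.
Proof. decide equality; apply PeanoNat.Nat.eq_dec. Defined.

Fixpoint item_eq_dec (i j : item) {struct i} : {i = j} + {i <> j}.
Proof.
  destruct i as [f|f|f u], j as [g|g|g v]; try (right; discriminate).
  - destruct (form_eq_dec f g); [left; subst; auto|right; congruence].
  - destruct (form_eq_dec f g); [left; subst; auto|right; congruence].
  - destruct (form_eq_dec f g); [|right; congruence]. subst.
    assert (H : {u = v} + {u <> v}).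
    { revert v; induction u as [|a u IH]; intros [|b v]; try (right; discriminate); [left; auto|].
      destruct (item_eq_dec a b); [|right; congruence]. subst.
      destruct (IH v); [left; subst; auto|right; congruence]. }
    destruct H; [left; subst; auto|right; congruence].
Defined.

Arguments item_eq_dec : simpl never.

Ltac psolve :=
  apply (Permutation_count_occ item_eq_dec); intro;
  repeat (rewrite ?count_occ_app; simpl);
  repeat match goal with |- context [item_eq_dec ?a ?b] => destruct (item_eq_dec a b) end;
  lia.

Ltac esolve := apply eqv_perm; psolve.

Example test_ps (A B : seqnt) x y : A ++ x :: B ++ [y] ~~ y :: B ++ A ++ [x].
Proof. esolve. Qed.

Lemma strip_app a b : strip (a ++ b) = strip a ++ strip b.
Proof. unfold strip; apply flat_map_app. Qed.
Lemma strip_cons i a : strip (i :: a) = strip_item i ++ strip a.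
Proof. reflexivity. Qed.
Lemma strip_item_comp f u : strip_item (IComp f u) = [IComp f (strip u)].
Proof.
  reflexivity.
Qed.
Lemma strip_single i : strip [i] = strip_item i.
Proof. unfold strip; simpl; apply app_nil_r. Qed.
Lemma nouts_app a b : nouts (a ++ b) = nouts a + nouts b.
Proof. induction a; simpl; auto. unfold nouts in *; simpl. rewrite IHa; lia. Qed.
Lemma nouts_cons i a : nouts (i :: a) = nouts_item i + nouts a.
Proof. reflexivity. Qed.
Lemma nouts_single i : nouts [i] = nouts_item i.
Proof. unfold nouts; simpl; lia. Qed.
Lemma nouts_item_comp f u : nouts_item (IComp f u) = nouts u.
Proof. simpl. induction u; simpl; auto. Qed.

Lemma equiv_strip_both :
  (forall l1 l2, l1 ~~ l2 -> strip l1 ~~ strip l2 /\ nouts l1 = nouts l2) /\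
  (forall i j, item_equiv i j -> strip_item i ~~ strip_item j /\ nouts_item i = nouts_item j).
Proof.
  split.
  - apply (seq_equiv_ind2 (fun l1 l2 _ => strip l1 ~~ strip l2 /\ nouts l1 = nouts l2)
             (fun i j _ => strip_item i ~~ strip_item j /\ nouts_item i = nouts_item j)); intros.
    + split; auto.
    + destruct H, H0. rewrite !strip_cons, !nouts_cons. split; [apply eqv_app; auto| lia].
    + rewrite !strip_cons, !nouts_cons. split; [|lia]. rewrite !app_assoc. apply eqv_app; auto. apply eqv_app_comm.
    + destruct H, H0. split; [eapply eqv_trans; eauto| lia].
    + split; auto.
    + split; auto.
    + destruct H. rewrite !strip_item_comp, !nouts_item_comp. split; auto. constructor; [constructor; auto|constructor].
  - apply (item_equiv_ind2 (fun l1 l2 _ => strip l1 ~~ strip l2 /\ nouts l1 = nouts l2)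
             (fun i j _ => strip_item i ~~ strip_item j /\ nouts_item i = nouts_item j)); intros.
    + split; auto.
    + destruct H, H0. rewrite !strip_cons, !nouts_cons. split; [apply eqv_app; auto| lia].
    + rewrite !strip_cons, !nouts_cons. split; [|lia]. rewrite !app_assoc. apply eqv_app; auto. apply eqv_app_comm.
    + destruct H, H0. split; [eapply eqv_trans; eauto| lia].
    + split; auto.
    + split; auto.
    + destruct H. rewrite !strip_item_comp, !nouts_item_comp. split; auto. constructor; [constructor; auto|constructor].
Qed.
Lemma strip_eqv l1 l2 : l1 ~~ l2 -> strip l1 ~~ strip l2.
Proof. apply equiv_strip_both. Qed.
Lemma nouts_eqv l1 l2 : l1 ~~ l2 -> nouts l1 = nouts l2.
Proof. apply equiv_strip_both. Qed.

Lemma strip_strip_both : (forall i, strip (strip_item i) = strip_item i) /\ (forall l, strip (strip l) = strip l).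
Proof.
  assert (H : forall l, strip (strip l) = strip l).
  { apply (seq_ind2 (fun i => strip (strip_item i) = strip_item i) (fun l => strip (strip l) = strip l)); intros; auto.
    - rewrite strip_item_comp, strip_single, strip_item_comp, H. reflexivity.
    - rewrite strip_cons, strip_app, H, H0. reflexivity. }
  split; auto. intros [f|f|f u]; auto. rewrite strip_item_comp, strip_single, strip_item_comp, H; auto.
Qed.
Lemma strip_strip l : strip (strip l) = strip l. Proof. apply strip_strip_both. Qed.

Lemma nouts_strip l : nouts (strip l) = 0.
Proof.
  apply (seq_ind2 (fun i => nouts (strip_item i) = 0) (fun l => nouts (strip l) = 0)); intros; auto.
  - rewrite strip_item_comp, nouts_single, nouts_item_comp, H. auto.
  - rewrite strip_cons, nouts_app, H, H0. auto.
Qed.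

Lemma strip_nouts0 l : nouts l = 0 -> strip l = l.
Proof.
  revert l; apply (seq_ind2 (fun i => nouts_item i = 0 -> strip_item i = [i]) (fun l => nouts l = 0 -> strip l = l)); intros; auto.
  - simpl in H; discriminate.
  - rewrite strip_item_comp. rewrite nouts_item_comp in H0. rewrite H; auto.
  - rewrite nouts_cons in H1. rewrite strip_cons, H, H0; auto; lia.
Qed.

Lemma fill_eqv c X Y : X ~~ Y -> fill c X ~~ fill c Y.
Proof.
  induction c; simpl; intros H.
  - apply eqv_app_r; auto.
  - apply eqv_app_r. constructor; [constructor; auto| constructor].
Qed.

Lemma strip_fill c X : strip (fill c X) = fill (down c) (strip X).
Proof.
  induction c; simpl.
  - apply strip_app.
  - rewrite strip_app, strip_single, strip_item_comp, IHc. reflexivity.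
Qed.

Fixpoint nc (c : ctx) : nat := match c with Hole D => nouts D | Down D _ c' => nouts D + nc c' end.
Lemma nouts_fill c X : nouts (fill c X) = nc c + nouts X.
Proof.
  induction c; simpl.
  - apply nouts_app.
  - rewrite nouts_app, nouts_single, nouts_item_comp, IHc. lia.
Qed.

Lemma down_down c : down (down c) = down c.
Proof. induction c; simpl; rewrite ?strip_strip, ?IHc; auto. Qed.
Lemma nc_down c : nc (down c) = 0.
Proof. induction c; simpl; rewrite ?nouts_strip, ?IHc; auto. Qed.

Fixpoint ceq (c1 c2 : ctx) : Prop :=
  match c1, c2 with
  | Hole D1, Hole D2 => D1 ~~ D2
  | Down D1 p1 c1', Down D2 p2 c2' => D1 ~~ D2 /\ p1 = p2 /\ ceq c1' c2'
  | _, _ => False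
  end.

Lemma ceq_refl c : ceq c c. Proof. induction c; simpl; auto. Qed.
Lemma ceq_sym c1 c2 : ceq c1 c2 -> ceq c2 c1.
Proof. revert c2; induction c1; destruct c2; simpl; intuition; subst; auto using eqv_sym. Qed.
Lemma ceq_trans c1 c2 c3 : ceq c1 c2 -> ceq c2 c3 -> ceq c1 c3.
Proof. revert c2 c3; induction c1; destruct c2, c3; simpl; intuition; subst; eauto using eqv_trans. Qed.
Lemma ceq_fill c1 c2 X1 X2 : ceq c1 c2 -> X1 ~~ X2 -> fill c1 X1 ~~ fill c2 X2.
Proof.
  revert c2; induction c1; destruct c2; simpl; intuition; subst.
  - apply eqv_app; auto.
  - apply eqv_app; auto. constructor; [constructor; auto|constructor].
Qed.
Lemma ceq_down c1 c2 : ceq c1 c2 -> ceq (down c1) (down c2).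
Proof. revert c2; induction c1; destruct c2; simpl; intuition; subst; auto using strip_eqv. Qed.
Lemma ceq_nc c1 c2 : ceq c1 c2 -> nc c1 = nc c2.
Proof. revert c2; induction c1; destruct c2; simpl; intuition; subst; auto using nouts_eqv. Qed.

Lemma down_nc0 c : nc c = 0 -> ceq (down c) c.
Proof.
  induction c; simpl; intros H.
  - rewrite strip_nouts0; auto.
  - rewrite strip_nouts0 by lia. repeat split; auto. apply IHc; lia.
Qed.

Fixpoint ccomp (c d : ctx) : ctx :=
  match c with
  | Hole D => match d with Hole E => Hole (D ++ E) | Down E p d' => Down (D ++ E) p d' end
  | Down D p c' => Down D p (ccomp c' d)
  end.

Lemma fill_ccomp c d X : fill (ccomp c d) X = fill c (fill d X).
Proof. induction c; simpl; [destruct d; simpl; rewrite app_assoc; auto| rewrite IHc; auto]. Qed.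
Lemma down_ccomp c d : down (ccomp c d) = ccomp (down c) (down d).
Proof. induction c; simpl; [destruct d; simpl; rewrite strip_app; auto| rewrite IHc; auto]. Qed.
Lemma ceq_ccomp c1 c2 d1 d2 : ceq c1 c2 -> ceq d1 d2 -> ceq (ccomp c1 d1) (ccomp c2 d2).
Proof.
  revert c2; induction c1; destruct c2; simpl; intuition; subst;
  destruct d1, d2; simpl in *; intuition; subst; auto using eqv_app.
Qed.
Lemma nc_ccomp c d : nc (ccomp c d) = nc c + nc d.
Proof. induction c; simpl; [destruct d; simpl; rewrite nouts_app; lia| rewrite IHc; lia]. Qed.

Lemma strip_nil : strip [] = []. Proof. reflexivity. Qed.
Lemma strip_item_in f : strip_item (IIn f) = [IIn f]. Proof. reflexivity. Qed.
Lemma strip_item_out f : strip_item (IOut f) = []. Proof. reflexivity. Qed.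
Lemma nouts_nil : nouts [] = 0. Proof. reflexivity. Qed.
Lemma nouts_item_in f : nouts_item (IIn f) = 0. Proof. reflexivity. Qed.
Lemma nouts_item_out f : nouts_item (IOut f) = 1. Proof. reflexivity. Qed.
Arguments strip : simpl never.
Arguments strip_item : simpl never.
Arguments nouts : simpl never.
Arguments nouts_item : simpl never.
Ltac strip_simpl := repeat (rewrite ?strip_app, ?strip_cons, ?strip_nil, ?strip_item_in, ?strip_item_out, ?strip_item_comp, ?strip_fill, ?strip_strip; simpl).
Ltac nouts_simpl := repeat (rewrite ?nouts_app, ?nouts_cons, ?nouts_nil, ?nouts_item_in, ?nouts_item_out, ?nouts_item_comp, ?nouts_fill, ?nouts_strip; simpl).

Inductive ctx2 : Type :=
| KN : seqnt -> ctx2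
| KL : seqnt -> form -> ctx -> ctx2
| KR : seqnt -> form -> ctx -> ctx2
| KS : seqnt -> form -> ctx -> form -> ctx -> ctx2
| KD : seqnt -> form -> ctx2 -> ctx2.

Fixpoint fill2 (K : ctx2) (A B : seqnt) : seqnt :=
  match K with
  | KN D => D ++ A ++ B
  | KL D p c => D ++ A ++ [IComp p (fill c B)]
  | KR D p c => D ++ B ++ [IComp p (fill c A)]
  | KS D p1 c1 p2 c2 => D ++ [IComp p1 (fill c1 A); IComp p2 (fill c2 B)]
  | KD D p K' => D ++ [IComp p (fill2 K' A B)]
  end.

Fixpoint plug1 (K : ctx2) (A : seqnt) : ctx :=
  match K with
  | KN D => Hole (D ++ A)
  | KL D p c => Down (D ++ A) p c
  | KR D p c => Hole (D ++ [IComp p (fill c A)])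
  | KS D p1 c1 p2 c2 => Down (D ++ [IComp p1 (fill c1 A)]) p2 c2
  | KD D p K' => Down D p (plug1 K' A)
  end.

Fixpoint plug2 (K : ctx2) (B : seqnt) : ctx :=
  match K with
  | KN D => Hole (D ++ B)
  | KL D p c => Hole (D ++ [IComp p (fill c B)])
  | KR D p c => Down (D ++ B) p c
  | KS D p1 c1 p2 c2 => Down (D ++ [IComp p2 (fill c2 B)]) p1 c1
  | KD D p K' => Down D p (plug2 K' B)
  end.

Fixpoint down2 (K : ctx2) : ctx2 :=
  match K with
  | KN D => KN (strip D)
  | KL D p c => KL (strip D) p (down c)
  | KR D p c => KR (strip D) p (down c)
  | KS D p1 c1 p2 c2 => KS (strip D) p1 (down c1) p2 (down c2)
  | KD D p K' => KD (strip D) p (down2 K')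
  end.

Fixpoint nc2 (K : ctx2) : nat :=
  match K with
  | KN D => nouts D
  | KL D p c => nouts D + nc c
  | KR D p c => nouts D + nc c
  | KS D p1 c1 p2 c2 => nouts D + nc c1 + nc c2
  | KD D p K' => nouts D + nc2 K'
  end.

Lemma eqv_comp1 p u v : u ~~ v -> [IComp p u] ~~ [IComp p v].
Proof. intros; constructor; [constructor; auto|constructor]. Qed.

Lemma fill_plug1 K A B : fill (plug1 K A) B ~~ fill2 K A B.
Proof.
  induction K; simpl; rewrite <- ?app_assoc; try solve [auto | apply eqv_app_r; esolve];
  apply eqv_app_r; apply eqv_comp1; auto.
Qed.

Lemma fill_plug2 K B A : fill (plug2 K B) A ~~ fill2 K A B.
Proof.
  induction K; simpl; rewrite <- ?app_assoc; try solve [auto | apply eqv_app_r; esolve];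
  apply eqv_app_r; apply eqv_comp1; auto.
Qed.

Lemma down_plug1 K A : down (plug1 K A) = plug1 (down2 K) (strip A).
Proof. induction K; simpl; strip_simpl; rewrite ?IHK; auto. Qed.

Lemma down_plug2 K B : down (plug2 K B) = plug2 (down2 K) (strip B).
Proof. induction K; simpl; strip_simpl; rewrite ?IHK; auto. Qed.

Lemma strip_fill2 K A B : strip (fill2 K A B) = fill2 (down2 K) (strip A) (strip B).
Proof. induction K; simpl; strip_simpl; rewrite ?IHK; auto. Qed.

Lemma nouts_fill2 K A B : nouts (fill2 K A B) = nc2 K + nouts A + nouts B.
Proof. induction K; simpl; nouts_simpl; rewrite ?IHK; lia. Qed.

Lemma nc_plug1 K A : nc (plug1 K A) = nc2 K + nouts A.
Proof. induction K; simpl; nouts_simpl; rewrite ?IHK; lia. Qed.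
Lemma nc_plug2 K B : nc (plug2 K B) = nc2 K + nouts B.
Proof. induction K; simpl; nouts_simpl; rewrite ?IHK; lia. Qed.

Fixpoint ceq2 (K1 K2 : ctx2) : Prop :=
  match K1, K2 with
  | KN D1, KN D2 => D1 ~~ D2
  | KL D1 p1 c1, KL D2 p2 c2 => D1 ~~ D2 /\ p1 = p2 /\ ceq c1 c2
  | KR D1 p1 c1, KR D2 p2 c2 => D1 ~~ D2 /\ p1 = p2 /\ ceq c1 c2
  | KS D1 p1 c1 q1 d1, KS D2 p2 c2 q2 d2 => D1 ~~ D2 /\ p1 = p2 /\ ceq c1 c2 /\ q1 = q2 /\ ceq d1 d2
  | KD D1 p1 K1', KD D2 p2 K2' => D1 ~~ D2 /\ p1 = p2 /\ ceq2 K1' K2'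
  | _, _ => False
  end.

Lemma ceq2_refl K : ceq2 K K.
Proof. induction K; simpl; auto using ceq_refl. Qed.
Lemma ceq2_plug1 K1 K2 A1 A2 : ceq2 K1 K2 -> A1 ~~ A2 -> ceq (plug1 K1 A1) (plug1 K2 A2).
Proof.
  revert K2; induction K1; destruct K2; simpl; intuition; subst; auto using eqv_app;
  apply eqv_app; auto; apply eqv_comp1; apply ceq_fill; auto.
Qed.
Lemma ceq2_plug2 K1 K2 A1 A2 : ceq2 K1 K2 -> A1 ~~ A2 -> ceq (plug2 K1 A1) (plug2 K2 A2).
Proof.
  revert K2; induction K1; destruct K2; simpl; intuition; subst; auto using eqv_app;
  apply eqv_app; auto; apply eqv_comp1; apply ceq_fill; auto.
Qed.
Lemma ceq2_fill2 K1 K2 A1 A2 B1 B2 : ceq2 K1 K2 -> A1 ~~ A2 -> B1 ~~ B2 -> fill2 K1 A1 B1 ~~ fill2 K2 A2 B2.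
Proof.
  intros. eapply eqv_trans; [apply eqv_sym, fill_plug1|]. eapply eqv_trans; [|apply fill_plug1].
  apply ceq_fill; auto. apply ceq2_plug1; auto.
Qed.
Lemma ceq2_down K1 K2 : ceq2 K1 K2 -> ceq2 (down2 K1) (down2 K2).
Proof. revert K2; induction K1; destruct K2; simpl; intuition; subst; auto using strip_eqv, ceq_down. Qed.
Lemma ceq2_sym K1 K2 : ceq2 K1 K2 -> ceq2 K2 K1.
Proof. revert K2; induction K1; destruct K2; simpl; intuition; subst; auto using eqv_sym, ceq_sym. Qed.
Lemma ceq2_trans K1 K2 K3 : ceq2 K1 K2 -> ceq2 K2 K3 -> ceq2 K1 K3.
Proof. revert K2 K3; induction K1; destruct K2, K3; simpl; intuition; subst; eauto using eqv_trans, ceq_trans. Qed.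
Lemma down2_down2 K : down2 (down2 K) = down2 K.
Proof. induction K; simpl; rewrite ?strip_strip, ?down_down, ?IHK; auto. Qed.
Lemma nc2_down K : nc2 (down2 K) = 0.
Proof. induction K; simpl; rewrite ?nouts_strip, ?nc_down, ?IHK; auto. Qed.
Lemma down2_nc0 K : nc2 K = 0 -> ceq2 (down2 K) K.
Proof.
  induction K; simpl; intros H; rewrite ?strip_nouts0 by lia; repeat split; auto;
  try apply down_nc0; try apply IHK; try lia.
Qed.
Lemma fill_plug12 K A B : fill (plug1 K A) B ~~ fill (plug2 K B) A.
Proof. eapply eqv_trans; [apply fill_plug1|apply eqv_sym, fill_plug2]. Qed.

Lemma ie_comp_inv p u y : item_equiv (IComp p u) y -> exists v, y = IComp p v /\ u ~~ v.
Proof. intros H; inversion H; subst; eauto. Qed.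
Lemma ie_comp_inv2 p u q v : item_equiv (IComp p u) (IComp q v) -> p = q /\ u ~~ v.
Proof. intros H; inversion H; subst; auto. Qed.

Lemma eqv_mid l1 l2 a b : item_equiv a b -> l1 ++ a :: l2 ~~ l1 ++ b :: l2.
Proof. intros; apply eqv_app_r; constructor; auto. Qed.

Definition core_res c X c' Z : Prop :=
 (exists K, ceq c (plug2 K Z) /\ ceq c' (plug1 K X)) \/
 (exists Z1 e u Z2 c3, Z = Z1 ++ IComp e u :: Z2 /\ u ~~ fill c3 X /\ ceq c (ccomp c' (Down (Z1 ++ Z2) e c3))) \/
 (exists X1 e u X2 c3, X = X1 ++ IComp e u :: X2 /\ u ~~ fill c3 Z /\ ceq c' (ccomp c (Down (X1 ++ X2) e c3))) \/
 (exists a M X0 Z0 E, M <> [] /\ X ~~ M ++ X0 /\ Z ~~ M ++ Z0 /\ ceq c (ccomp a (Hole (Z0 ++ E))) /\ ceq c' (ccomp a (Hole (X0 ++ E)))).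

Lemma core c X c' Z : fill c X ~~ fill c' Z -> core_res c X c' Z.
Proof.
  revert c'; induction c as [D|D p c0 IH]; intros [D'|D' p' c0'] H; simpl in H.
  - assert (H' : X ++ D ~~ Z ++ D').
    { eapply eqv_trans; [apply eqv_app_comm|]. eapply eqv_trans; [apply H| apply eqv_app_comm]. }
    apply eqv_cross in H' as [A1 [A2 [B1 [B2 [HX [HD [HZ HD']]]]]]].
    destruct A1 as [|a A1].
    + left. exists (KN B2); simpl; split.
      * eapply eqv_trans; [apply HD|]. eapply eqv_trans; [apply eqv_app_comm|]. apply eqv_app_r, eqv_sym; auto.
      * eapply eqv_trans; [apply HD'|]. eapply eqv_trans; [apply eqv_app_comm|]. apply eqv_app_r, eqv_sym; auto.
    + right; right; right. exists (Hole []), (a :: A1), A2, B1, B2; simpl; repeat split; auto. discriminate.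
  - assert (H' : IComp p' (fill c0' Z) :: D' ~~ D ++ X).
    { eapply eqv_trans; [|apply eqv_sym, H]. esolve. }
    apply eqv_cons_app in H' as [[D1 [y [D2 [-> [Hy HD']]]]]|[X1 [y [X2 [-> [Hy HD']]]]]].
    + left. exists (KL (D1 ++ D2) p' c0'); simpl; split.
      * eapply eqv_trans; [apply eqv_mid, ie_sym, Hy|]. esolve.
      * repeat split; auto using ceq_refl. rewrite <- app_assoc; auto.
    + apply ie_comp_inv in Hy as [u [-> Hu]].
      right; right; left. exists X1, p', u, X2, c0'; repeat split; auto using eqv_sym, ceq_refl.
  - assert (H' : IComp p (fill c0 X) :: D ~~ D' ++ Z).
    { eapply eqv_trans; [|apply H]. esolve. }
    apply eqv_cons_app in H' as [[D1 [y [D2 [-> [Hy HD']]]]]|[Z1 [y [Z2 [-> [Hy HD']]]]]].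
    + left. exists (KR (D1 ++ D2) p c0); simpl; split.
      * repeat split; auto using ceq_refl. rewrite <- app_assoc; auto.
      * eapply eqv_trans; [apply eqv_mid, ie_sym, Hy|]. esolve.
    + apply ie_comp_inv in Hy as [u [-> Hu]].
      right; left. exists Z1, p, u, Z2, c0; repeat split; auto using eqv_sym, ceq_refl.
  - assert (H' : IComp p (fill c0 X) :: D ~~ D' ++ [IComp p' (fill c0' Z)]).
    { eapply eqv_trans; [|apply H]. esolve. }
    apply eqv_cons_app in H' as [[D1 [y [D2 [-> [Hy HD']]]]]|[B1 [y [B2 [HB [Hy HD']]]]]].
    + assert (H2 : IComp p' (fill c0' Z) :: (D1 ++ D2) ~~ D).
      { eapply eqv_trans; [|apply eqv_sym, HD']. esolve. }
      apply eqv_cons_inv in H2 as [E1 [z [E2 [-> [Hz HE]]]]].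
      left. exists (KS (E1 ++ E2) p c0 p' c0'); simpl; split.
      * repeat split; auto using ceq_refl.
        eapply eqv_trans; [apply eqv_mid, ie_sym, Hz|]. esolve.
      * repeat split; auto using ceq_refl.
        eapply eqv_trans; [apply eqv_mid, ie_sym, Hy|].
        eapply eqv_trans; [|apply eqv_app; [apply HE|apply eqv_refl]]. esolve.
    + destruct B1 as [|b B1]; simpl in HB.
      2:{ destruct B1; discriminate. }
      inversion HB; subst. rewrite app_nil_r in HD'.
      apply ie_comp_inv2 in Hy as [<- Hc].
      destruct (IH c0' Hc) as [[K [H1 H2]]|[[Z1 [e [u [Z2 [c3 [H1 [H2 H3]]]]]]]|[[X1 [e [u [X2 [c3 [H1 [H2 H3]]]]]]]|[a [M [X0 [Z0 [E [H1 [H2 [H3 [H4 H5]]]]]]]]]]]].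
      * left. exists (KD D p K); simpl; repeat split; auto using eqv_sym.
      * right; left. exists Z1, e, u, Z2, c3; simpl; repeat split; auto using eqv_sym.
      * right; right; left. exists X1, e, u, X2, c3; simpl; repeat split; auto using eqv_sym.
      * right; right; right. exists (Down D p a), M, X0, Z0, E; simpl; repeat split; auto using eqv_sym.
Qed.

Inductive tmpl : Type := TC (Z : seqnt) | TD (Z : seqnt) | TF (s : seqnt).

Definition inst (c : ctx) (t : tmpl) : seqnt :=
  match t with TC Z => fill c Z | TD Z => fill (down c) Z | TF s => s end.

Inductive lrule : list tmpl -> seqnt -> Prop :=
| l_init p : lrule [] [IIn (Var p); IOut (Var p)]
| l_bot : lrule [] [IIn Bot]
| l_andL f g : lrule [TC [IIn f; IIn g]] [IIn (And f g)]
| l_andR f g : lrule [TC [IOut f]; TC [IOut g]] [IOut (And f g)]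
| l_orL f g : lrule [TC [IIn f]; TC [IIn g]] [IIn (Or f g)]
| l_orR1 f g : lrule [TC [IOut f]] [IOut (Or f g)]
| l_orR2 f g : lrule [TC [IOut g]] [IOut (Or f g)]
| l_impL f g : lrule [TD [IIn (Imp f g); IOut f]; TC [IIn g]] [IIn (Imp f g)]
| l_impR f g : lrule [TC [IIn f; IOut g]] [IOut (Imp f g)]
| l_boxL f g e D : lrule [TF [IIn f; IOut e]; TF [IIn e; IOut f];
                          TC [IIn (Box f g); IComp e (IIn g :: D)]] [IIn (Box f g); IComp e D]
| l_boxR f g : lrule [TC [IComp f [IOut g]]] [IOut (Box f g)]
| l_diaL f g : lrule [TC [IComp f [IIn g]]] [IIn (Dia f g)]
| l_diaR f g e D : lrule [TF [IIn f; IOut e]; TF [IIn e; IOut f];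
                          TC [IComp e (IOut g :: D)]] [IOut (Dia f g); IComp e D].

Inductive Dh : nat -> seqnt -> Prop :=
| Dh_r n c T Z s : lrule T Z -> fill c Z ~~ s -> (forall t, In t T -> Dh n (inst c t)) -> Dh (S n) s.

Definition Der s := exists n, Dh n s.

Lemma Dh_eqv n s s' : Dh n s -> s ~~ s' -> Dh n s'.
Proof. intros H; inversion H; subst; intros; econstructor; eauto using eqv_trans. Qed.

Lemma Der_eqv s s' : Der s -> s ~~ s' -> Der s'.
Proof. intros [n H] E; exists n; eauto using Dh_eqv. Qed.

Lemma Dh_mono n s : Dh n s -> forall m, n <= m -> Dh m s.
Proof.
  induction 1; intros m Hm. destruct m; [lia|].
  econstructor; eauto. intros t Ht. apply H2; auto; lia.
Qed.

Lemma Der_rule c T Z : lrule T Z -> (forall t, In t T -> Der (inst c t)) -> Der (fill c Z).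
Proof.
  intros HR HT.
  assert (Hm : exists m, forall t, In t T -> Dh m (inst c t)).
  { clear HR. induction T as [|t T IH].
    - exists 0; intros t [].
    - destruct (HT t (or_introl eq_refl)) as [n1 H1].
      destruct IH as [n2 H2]; [intros; apply HT; right; auto|].
      exists (max n1 n2). intros t' [<-|Ht']; eapply Dh_mono; eauto; lia. }
  destruct Hm as [m Hm]. exists (S m). econstructor; eauto.
Qed.

Lemma inst_ceq c1 c2 t : ceq c1 c2 -> inst c1 t ~~ inst c2 t.
Proof. destruct t; simpl; intros; auto using ceq_fill, ceq_down. Qed.

Lemma comp_rule T Z1 e u Z2 : lrule T (Z1 ++ IComp e u :: Z2) ->
  exists W w a b, Z2 = [] /\ T = [TF a; TF b; TC (W ++ [IComp e (w :: u)])] /\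
    forall u', lrule [TF a; TF b; TC (W ++ [IComp e (w :: u')])] (Z1 ++ [IComp e u']).
Proof.
  intros H; inversion H; subst;
  repeat match goal with
  | H : _ = _ ++ _ :: _ |- _ => symmetry in H
  | H : ?Z1 ++ _ :: _ = _ |- _ => destruct Z1 as [|? Z1]; simpl in H; inversion H; subst; clear H
  end; try discriminate;
  try (match goal with H : [] = _ ++ _ :: _ |- _ => apply app_cons_not_nil in H; contradiction end).
  - eexists [IIn (Box _ _)], _, _, _; split; [reflexivity|split; [reflexivity|]]. intros; simpl; constructor.
  - eexists [], _, _, _; split; [reflexivity|split; [reflexivity|]]. intros; simpl; constructor.
Qed.

Definition hp_edit (n : nat) (R : seqnt -> seqnt -> Prop) :=
  forall c X Y, R X Y -> Dh n (fill c X) -> Dh n (fill c Y).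

Lemma transfer_K n R T Z c' K X Y :
  hp_edit n R -> (forall X Y, R X Y -> R (strip X) (strip Y)) -> R X Y -> lrule T Z ->
  ceq c' (plug1 K X) -> (forall t, In t T -> Dh n (inst c' t)) -> Dh (S n) (fill (plug1 K Y) Z).
Proof.
  intros HE HS HR HL Hc HT. econstructor; [apply HL|apply eqv_refl|].
  intros t Ht. assert (HT' : Dh n (inst (plug1 K X) t)) by (eapply Dh_eqv; [apply (HT t Ht)| apply inst_ceq, Hc]). clear HT; rename HT' into HT.
  destruct t as [Zp|Zp|s]; simpl in *.
  - apply Dh_eqv with (s := fill (plug2 K Zp) Y); [|apply eqv_sym, fill_plug12].
    apply HE with X; auto. eapply Dh_eqv; [apply HT|apply fill_plug12].
  - rewrite down_plug1 in *.
    apply Dh_eqv with (s := fill (plug2 (down2 K) Zp) (strip Y)); [|apply eqv_sym, fill_plug12].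
    apply HE with (strip X); auto. eapply Dh_eqv; [apply HT|apply fill_plug12].
  - auto.
Qed.

Lemma transfer_inZ n R T c' Z1 e u Z2 c3 X Y :
  hp_edit n R -> R X Y -> lrule T (Z1 ++ IComp e u :: Z2) -> u ~~ fill c3 X ->
  (forall t, In t T -> Dh n (inst c' t)) -> Dh (S n) (fill c' (Z1 ++ IComp e (fill c3 Y) :: Z2)).
Proof.
  intros HE HR HL Hu HT.
  destruct (comp_rule _ _ _ _ _ HL) as [W [w [a [b [-> [-> Hr]]]]]].
  econstructor; [apply Hr|apply eqv_refl|].
  intros t [<-|[<-|[<-|[]]]]; simpl.
  - apply (HT (TF a)); left; auto.
  - apply (HT (TF b)); right; left; auto.
  - assert (H3 := HT _ (or_intror (or_intror (or_introl eq_refl)))). simpl in H3.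
    set (cc := ccomp c' (Down W e (ccomp (Hole [w]) c3))).
    assert (E1 : forall V, fill cc V = fill c' (W ++ [IComp e (w :: fill c3 V)])).
    { intros V; unfold cc; rewrite fill_ccomp; simpl; destruct c3; reflexivity. }
    rewrite <- E1. apply HE with X; auto. rewrite E1.
    eapply Dh_eqv; [apply H3|]. apply fill_eqv, eqv_app_r, eqv_comp1. constructor; auto.
Qed.

Lemma core_ctx_eq c X c' Z : ceq c (ccomp c' (Hole Z)) -> fill c X ~~ fill c' (Z ++ X).
Proof. intros H. eapply eqv_trans; [apply ceq_fill; [apply H|apply eqv_refl]|]. rewrite fill_ccomp; auto. Qed.

Lemma hp_driver (R : seqnt -> seqnt -> Prop)
  (HS : forall X Y, R X Y -> R (strip X) (strip Y))
  (Hov : forall n, hp_edit n R -> forall c X Y c' T Z, R X Y -> lrule T Z ->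
         (forall t, In t T -> Dh n (inst c' t)) ->
         forall a M X0 Z0 E, M <> [] -> X ~~ M ++ X0 -> Z ~~ M ++ Z0 ->
         ceq c (ccomp a (Hole (Z0 ++ E))) -> ceq c' (ccomp a (Hole (X0 ++ E))) ->
         Dh (S n) (fill c Y))
  (HinX : forall n, hp_edit n R -> forall c X Y c' T Z, R X Y -> lrule T Z ->
         (forall t, In t T -> Dh n (inst c' t)) ->
         forall X1 e u X2 c3, X = X1 ++ IComp e u :: X2 -> u ~~ fill c3 Z ->
         ceq c' (ccomp c (Down (X1 ++ X2) e c3)) -> Dh (S n) (fill c Y)) :
  forall n, hp_edit n R.
Proof.
  induction n as [|n IH]; intros c X Y HR HD.
  - inversion HD.
  - inversion HD as [? c' T Z s HL Hs HT]; subst.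
    destruct (core c X c' Z (eqv_sym _ _ Hs)) as [[K [H1 H2]]|[[Z1 [e [u [Z2 [c3 [H1 [H2 H3]]]]]]]|[[X1 [e [u [X2 [c3 [H1 [H2 H3]]]]]]]|[a [M [X0 [Z0 [E [H1 [H2 [H3 [H4 H5]]]]]]]]]]]].
    + eapply Dh_eqv; [eapply transfer_K; eauto|].
      eapply eqv_trans; [apply fill_plug12|]. apply ceq_fill; [apply ceq_sym; auto|apply eqv_refl].
    + subst Z. eapply Dh_eqv; [eapply transfer_inZ; eauto|].
      apply eqv_sym. eapply eqv_trans; [apply ceq_fill; [apply H3|apply eqv_refl]|].
      rewrite fill_ccomp. apply fill_eqv. simpl. esolve.
    + eapply HinX; eauto.
    + eapply Hov; eauto.
Qed.

Lemma eqv_length l1 l2 : l1 ~~ l2 -> length l1 = length l2.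
Proof. intros H; apply eqv_char in H as [u [HP HF]]. rewrite (Permutation_length HP). eapply Forall2_length; eauto. Qed.

Lemma single_eqv x M X0 : [x] ~~ M ++ X0 -> M <> [] -> exists y, M = [y] /\ X0 = [] /\ item_equiv x y.
Proof.
  intros H HM. assert (L := eqv_length _ _ H). rewrite length_app in L. simpl in L.
  destruct M as [|y [|]]; [congruence| |simpl in L; lia].
  destruct X0; [|simpl in L; lia]. exists y; repeat split; auto.
  simpl in H. apply eqv_cons_inv in H as [m1 [z [m2 [E [Hz _]]]]].
  destruct m1 as [|? [|]]; simpl in E; inversion E; subst; auto.
Qed.

Lemma ie_in_inv f y : item_equiv (IIn f) y -> y = IIn f.
Proof. intros H; inversion H; auto. Qed.
Lemma ie_out_inv f y : item_equiv (IOut f) y -> y = IOut f.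
Proof. intros H; inversion H; auto. Qed.

Lemma Dh_S n s : Dh n s -> Dh (S n) s.
Proof. intros; eapply Dh_mono; eauto. Qed.

Lemma ov_fill c a Z0 E c' X0 Y : ceq c (ccomp a (Hole (Z0 ++ E))) -> ceq c' (ccomp a (Hole (X0 ++ E))) ->
  fill c Y ~~ fill a (Z0 ++ E ++ Y) /\ fill c' Y ~~ fill a (X0 ++ E ++ Y).
Proof.
  intros H1 H2; split.
  - eapply eqv_trans; [apply core_ctx_eq, H1|]. rewrite app_assoc; auto.
  - eapply eqv_trans; [apply core_ctx_eq, H2|]. rewrite app_assoc; auto.
Qed.

Definition R_wk (X Y : seqnt) := X = [].

Lemma weaken_hp n : hp_edit n R_wk.
Proof.
  apply hp_driver.
  - unfold R_wk; intros; subst; reflexivity.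
  - intros n' _ c X Y c' T Z HR _ _ a M X0 Z0 E HM H2. unfold R_wk in HR; subst.
    apply eqv_nil_l in H2. destruct M; [congruence|discriminate].
  - intros n' _ c X Y c' T Z HR _ _ X1 e u X2 c3 HX. unfold R_wk in HR; subst.
    destruct X1; discriminate.
Qed.

Lemma weaken n c X W : Dh n (fill c X) -> Dh n (fill c (X ++ W)).
Proof.
  intros H.
  assert (E1: fill (ccomp c (Hole X)) [] = fill c X) by (rewrite fill_ccomp; simpl; rewrite app_nil_r; auto).
  assert (E2: fill (ccomp c (Hole X)) W = fill c (X ++ W)) by (rewrite fill_ccomp; auto).
  rewrite <- E2. apply (weaken_hp n) with []; [reflexivity| rewrite E1; auto].
Qed.

Lemma weaken_eqv n s c X W : Dh n s -> s ~~ fill c X -> Dh n (fill c (X ++ W)).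
Proof. intros; apply weaken; eapply Dh_eqv; eauto. Qed.

Inductive InvPair : form -> seqnt -> Prop :=
| ip_and f g : InvPair (And f g) [IIn f; IIn g]
| ip_or1 f g : InvPair (Or f g) [IIn f]
| ip_or2 f g : InvPair (Or f g) [IIn g]
| ip_imp f g : InvPair (Imp f g) [IIn g]
| ip_dia f g : InvPair (Dia f g) [IComp f [IIn g]].

Definition R_inv (X Y : seqnt) := exists phi, X = [IIn phi] /\ InvPair phi Y.

Lemma R_inv_strip X Y : R_inv X Y -> R_inv (strip X) (strip Y).
Proof.
  intros [phi [-> H]]. exists phi; split; [reflexivity|].
  inversion H; subst; strip_simpl; constructor.
Qed.

Ltac find_in H :=
  let Z1 := fresh "Z1" in let y := fresh "y" in let Z2 := fresh "Z2" in
  let E := fresh "E" in let Hy := fresh "Hy" in let HZ := fresh "HZ" in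
  apply eqv_cons_inv in H as [Z1 [y [Z2 [E [Hy HZ]]]]];
  destruct Z1 as [|? [|? [|]]]; simpl in E; inversion E; subst; clear E.

Lemma inv_hp n : hp_edit n R_inv.
Proof.
  apply hp_driver.
  - apply R_inv_strip.
  - intros n' _ c X Y c' T Z HR HL HT a M X0 Z0 E HM H2 H3 H4 H5.
    destruct HR as [phi [-> HP]].
    destruct (single_eqv _ _ _ H2 HM) as [y [-> [-> Hy]]].
    apply ie_in_inv in Hy; subst.
    destruct (ov_fill _ _ _ _ _ _ Y H4 H5) as [F1 F2].
    assert (H3' : IIn phi :: Z0 ~~ Z) by (apply eqv_sym; auto).
    inversion HL; subst; find_in H3'; try (apply ie_in_inv in Hy; discriminate);
      try (apply ie_out_inv in Hy; discriminate);
      try (apply ie_in_inv in Hy; inversion Hy; subst; inversion HP; fail);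
      apply ie_in_inv in Hy; inversion Hy; subst; apply eqv_nil_r in HZ; subst;
      inversion HP; subst;
      match goal with |- Dh _ (fill _ ?Y) =>
        apply Dh_S; eapply Dh_eqv; [apply (HT (TC Y)); simpl; auto|];
        simpl; eapply eqv_trans; [apply F2|]; eapply eqv_trans; [|apply eqv_sym, F1]; auto
      end.
  - intros n' _ c X Y c' T Z HR _ _ X1 e u X2 c3 HX.
    destruct HR as [phi [-> _]]. destruct X1 as [|? [|]]; discriminate.
Qed.

Lemma invert n c phi Y : InvPair phi Y -> Dh n (fill c [IIn phi]) -> Dh n (fill c Y).
Proof. intros HP H. apply (inv_hp n) with [IIn phi]; auto. exists phi; auto. Qed.

Lemma restore_gen n : forall u c X, Dh n (fill c (strip u ++ X)) -> Dh n (fill c (u ++ X)).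
Proof.
  apply (seq_ind2 (fun i => forall c X, Dh n (fill c (strip_item i ++ X)) -> Dh n (fill c (i :: X)))
                  (fun u => forall c X, Dh n (fill c (strip u ++ X)) -> Dh n (fill c (u ++ X)))); intros.
  - rewrite strip_item_in in H; auto.
  - rewrite strip_item_out in H; simpl in H. eapply Dh_eqv; [apply weaken with (W := [IOut f]); eauto|].
    apply fill_eqv. esolve.
  - rewrite strip_item_comp in H0. simpl in H0.
    set (d := ccomp c (Down X f (Hole []))).
    assert (E1 : forall V, fill d V ~~ fill c (IComp f V :: X)).
    { intros V; unfold d; rewrite fill_ccomp; simpl. apply fill_eqv. esolve. }
    eapply Dh_eqv; [|apply E1]. rewrite <- (app_nil_r u). apply H.
    eapply Dh_eqv; [apply H0|]. apply eqv_sym. rewrite app_nil_r. apply E1.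
  - auto.
  - rewrite strip_cons, <- app_assoc in H1. apply H in H1.
    assert (E1 : forall V, fill (ccomp c (Hole [i])) V = fill c (i :: V)) by (intros; rewrite fill_ccomp; reflexivity).
    rewrite <- E1 in *. simpl. rewrite <- E1. apply H0. auto.
Qed.

Lemma restore n c : forall e X, Dh n (fill e (fill (down c) X)) -> Dh n (fill e (fill c X)).
Proof.
  induction c as [D|D p c IH]; intros e X H; simpl in *.
  - apply (restore_gen n D e X); auto.
  - assert (H1 := restore_gen n D e _ H).
    set (d := ccomp e (Down D p (Hole []))).
    assert (E1 : forall V, fill d V = fill e (D ++ [IComp p V])) by (intros; unfold d; rewrite fill_ccomp; reflexivity).
    assert (H2 : Dh n (fill d (fill (down c) X))) by (rewrite E1; auto).
    apply IH in H2. rewrite E1 in H2. auto.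
Qed.

Lemma restore0 n c X : Dh n (fill (down c) X) -> Dh n (fill c X).
Proof. intros H. apply (restore n c (Hole [])). simpl. auto. Qed.

Lemma transfer_K_der (R : seqnt -> seqnt -> Prop) n T Z c' K X Y :
  (forall c X Y, R X Y -> Dh n (fill c X) -> Der (fill c Y)) ->
  (forall X Y, R X Y -> R (strip X) (strip Y)) -> R X Y -> lrule T Z ->
  ceq c' (plug1 K X) -> (forall t, In t T -> Dh n (inst c' t)) -> Der (fill (plug1 K Y) Z).
Proof.
  intros HE HS HR HL Hc HT. apply (Der_rule _ T); auto.
  intros t Ht. assert (HT' : Dh n (inst (plug1 K X) t)) by (eapply Dh_eqv; [apply (HT t Ht)| apply inst_ceq, Hc]). clear HT; rename HT' into HT.
  destruct t as [Zp|Zp|s]; simpl in *.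
  - apply Der_eqv with (s := fill (plug2 K Zp) Y); [|apply eqv_sym, fill_plug12].
    apply HE with X; auto. eapply Dh_eqv; [apply HT|apply fill_plug12].
  - rewrite down_plug1 in *.
    apply Der_eqv with (s := fill (plug2 (down2 K) Zp) (strip Y)); [|apply eqv_sym, fill_plug12].
    apply HE with (strip X); auto. eapply Dh_eqv; [apply HT|apply fill_plug12].
  - exists n; auto.
Qed.

Lemma transfer_inZ_der (R : seqnt -> seqnt -> Prop) n T c' Z1 e u Z2 c3 X Y :
  (forall c X Y, R X Y -> Dh n (fill c X) -> Der (fill c Y)) -> R X Y ->
  lrule T (Z1 ++ IComp e u :: Z2) -> u ~~ fill c3 X ->
  (forall t, In t T -> Dh n (inst c' t)) -> Der (fill c' (Z1 ++ IComp e (fill c3 Y) :: Z2)).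
Proof.
  intros HE HR HL Hu HT.
  destruct (comp_rule _ _ _ _ _ HL) as [W [w [a [b [-> [-> Hr]]]]]].
  eapply Der_rule; [apply Hr|].
  intros t [<-|[<-|[<-|[]]]]; simpl.
  - exists n; apply (HT (TF a)); left; auto.
  - exists n; apply (HT (TF b)); right; left; auto.
  - assert (H3 := HT _ (or_intror (or_intror (or_introl eq_refl)))). simpl in H3.
    set (cc := ccomp c' (Down W e (ccomp (Hole [w]) c3))).
    assert (E1 : forall V, fill cc V = fill c' (W ++ [IComp e (w :: fill c3 V)])).
    { intros V; unfold cc; rewrite fill_ccomp; simpl; destruct c3; reflexivity. }
    rewrite <- E1. apply HE with X; auto. rewrite E1.
    eapply Dh_eqv; [apply H3|]. apply fill_eqv, eqv_app_r, eqv_comp1. constructor; auto.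
Qed.

Definition CutAdm (xi : form) := forall c, Der (fill (down c) [IOut xi]) -> Der (fill c [IIn xi]) -> Der (fill c []).

Lemma Der_weaken c X W : Der (fill c X) -> Der (fill c (X ++ W)).
Proof. intros [n H]; exists n; apply weaken; auto. Qed.

Lemma eq_trans1 f g0 e : CutAdm f -> Der [IIn g0; IOut f] -> Der [IIn f; IOut e] -> Der [IIn g0; IOut e].
Proof.
  intros HC H1 H2. apply Der_eqv with (fill (Hole [IIn g0; IOut e]) []); [|simpl; auto].
  apply HC; simpl; strip_simpl.
  - auto.
  - apply Der_eqv with (fill (Hole []) ([IIn f; IOut e] ++ [IIn g0])); [apply Der_weaken; auto|]. simpl; esolve.
Qed.

Lemma eq_trans2 f g0 e : CutAdm f -> Der [IIn e; IOut f] -> Der [IIn f; IOut g0] -> Der [IIn e; IOut g0].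
Proof.
  intros HC H1 H2. apply Der_eqv with (fill (Hole [IIn e; IOut g0]) []); [|simpl; auto].
  apply HC; simpl; strip_simpl.
  - auto.
  - apply Der_eqv with (fill (Hole []) ([IIn f; IOut g0] ++ [IIn e])); [apply Der_weaken; auto|]. simpl; esolve.
Qed.

Lemma ie_comp p u v : u ~~ v -> item_equiv (IComp p u) (IComp p v).
Proof. constructor; auto. Qed.

Lemma single_eqv2 x y l : x :: l ~~ [y] -> l = [] /\ item_equiv x y.
Proof.
  intros H. assert (L := eqv_length _ _ H). simpl in L. destruct l; [|simpl in L; lia].
  split; auto. apply eqv_cons_inv in H as [m1 [z [m2 [E [Hz _]]]]].
  destruct m1 as [|? []]; simpl in E; inversion E; subst; auto.
Qed.

Lemma comp_rule2 T n1 p w n2 : lrule T (n1 ++ IComp p w :: n2) ->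
  exists y0, n1 = [y0] /\ n2 = [] /\ (forall q v, item_equiv y0 (IComp q v) -> False) /\
   ((exists g0 g, y0 = IIn (Box g0 g) /\ T = [TF [IIn g0; IOut p]; TF [IIn p; IOut g0]; TC [IIn (Box g0 g); IComp p (IIn g :: w)]]) \/
    (exists g0 g, y0 = IOut (Dia g0 g) /\ T = [TF [IIn g0; IOut p]; TF [IIn p; IOut g0]; TC [IComp p (IOut g :: w)]])).
Proof.
  intros HL. inversion HL; subst;
  match goal with H : _ = n1 ++ _ :: n2 |- _ => rename H into E2 end;
  destruct n1 as [|? [|? []]]; simpl in E2; inversion E2; subst; clear E2.
  - eexists; repeat split; [intros q v Hq; inversion Hq|]. left; eauto.
  - eexists; repeat split; [intros q v Hq; inversion Hq|]. right; eauto.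
Qed.

Lemma two_comp_overlap f A e B M X0 Z Z0 T : M <> [] -> [IComp f A; IComp e B] ~~ M ++ X0 ->
  Z ~~ M ++ Z0 -> lrule T Z ->
  exists h D other y0, Z = [y0; IComp h D] /\
    ((h = f /\ D ~~ A /\ other = IComp e B) \/ (h = e /\ D ~~ B /\ other = IComp f A)) /\
    X0 ~~ [other] /\ Z0 ~~ [y0].
Proof.
  intros HM H2 H3 HL. destruct M as [|m M']; [congruence|]. simpl in *.
  assert (H2' := eqv_sym _ _ H2). apply eqv_cons_inv in H2' as [m1 [y [m2 [E1 [Hy HR]]]]].
  assert (Hcase : (item_equiv m (IComp f A) /\ M' ++ X0 ~~ [IComp e B]) \/
                  (item_equiv m (IComp e B) /\ M' ++ X0 ~~ [IComp f A])).
  { destruct m1 as [|? [|? []]]; simpl in E1; inversion E1; subst; auto. }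
  clear E1 Hy HR m1 m2 y.
  assert (Hmc : exists p w, m = IComp p w).
  { destruct Hcase as [[Hm _]|[Hm _]]; apply ie_sym in Hm; inversion Hm; subst; eauto. }
  destruct Hmc as [p [w ->]].
  assert (H3' := eqv_sym _ _ H3). apply eqv_cons_inv in H3' as [n1 [z [n2 [E2 [Hz HR2]]]]].
  apply ie_comp_inv in Hz as [w' [-> Hw']]. subst Z.
  destruct (comp_rule2 _ _ _ _ _ HL) as [y0 [-> [-> [Hy0 _]]]].
  simpl in HR2.
  destruct M' as [|m' M''].
  2:{ exfalso. simpl in HR2. apply eqv_cons_inv in HR2 as [k1 [k [k2 [E3 [Hk _]]]]].
      destruct k1 as [|? []]; simpl in E3; inversion E3; subst.
      destruct Hcase as [[_ Hc]|[_ Hc]]; simpl in Hc; apply single_eqv2 in Hc as [_ Hc];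
      apply ie_sym in Hc; inversion Hc; subst; eapply Hy0, ie_sym; eauto. }
  simpl in *.
  destruct Hcase as [[Hm Hc]|[Hm Hc]]; apply ie_comp_inv2 in Hm as [<- Hm].
  - exists p, w', (IComp e B), y0; split; [reflexivity|]. split; [left; repeat split; eauto using eqv_trans, eqv_sym|]. split; auto; apply eqv_sym; auto.
  - exists p, w', (IComp f A), y0; split; [reflexivity|]. split; [right; repeat split; eauto using eqv_trans, eqv_sym|]. split; auto; apply eqv_sym; auto.
Qed.

Lemma fill_cd c W f c3 V : fill (ccomp c (Down W f c3)) V = fill c (W ++ [IComp f (fill c3 V)]).
Proof. rewrite fill_ccomp; reflexivity. Qed.
Lemma fill_cd_down c W f c3 V : fill (down (ccomp c (Down W f c3))) V = fill (down c) (strip W ++ [IComp f (fill (down c3) V)]).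
Proof. rewrite down_ccomp, fill_ccomp; reflexivity. Qed.
Lemma fill_dd c e B c3 V : fill (ccomp c (Down [] e (ccomp (Hole B) c3))) V = fill c [IComp e (B ++ fill c3 V)].
Proof. rewrite fill_ccomp; simpl; destruct c3; simpl; rewrite ?app_assoc; reflexivity. Qed.
Lemma fill_dd_down c e B c3 V : fill (down (ccomp c (Down [] e (ccomp (Hole B) c3)))) V = fill (down c) [IComp e (strip B ++ fill (down c3) V)].
Proof. rewrite down_ccomp, fill_ccomp; simpl. destruct c3; simpl; strip_simpl; rewrite ?app_assoc; reflexivity. Qed.
Lemma fill_ch a W V : fill (ccomp a (Hole W)) V = fill a (W ++ V).
Proof. rewrite fill_ccomp; reflexivity. Qed.

Definition R_ab f e (X Y : seqnt) := exists A B, X = [IComp f A; IComp e B] /\ Y = [IComp e (A ++ B)].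

Lemma R_ab_strip f e X Y : R_ab f e X Y -> R_ab f e (strip X) (strip Y).
Proof. intros [A [B [-> ->]]]. exists (strip A), (strip B). strip_simpl. auto. Qed.

Lemma Der_of n s : Dh n s -> Der s. Proof. exists n; auto. Qed.

Lemma absorb f e (HC : CutAdm f) (Hfe : Der [IIn f; IOut e]) (Hef : Der [IIn e; IOut f]) :
  forall n c A B, Dh n (fill c [IComp f A; IComp e B]) -> Der (fill c [IComp e (A ++ B)]).
Proof.
  induction n as [|n IH]; intros c A B HD; [inversion HD|].
  inversion HD as [? c' T Z s HL Hs HT]; subst.
  assert (IH' : forall c X Y, R_ab f e X Y -> Dh n (fill c X) -> Der (fill c Y))
    by (intros c0 X Y [A0 [B0 [-> ->]]] H; eauto).
  destruct (core c _ c' Z (eqv_sym _ _ Hs)) as [[K [H1 H2]]|[[Z1 [h [u [Z2 [c3 [H1 [H2 H3]]]]]]]|[[X1 [h [u [X2 [c3 [H1 [H2 H3]]]]]]]|[a [M [X0 [Z0 [E [H1 [H2 [H3 [H4 H5]]]]]]]]]]]].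
  - eapply Der_eqv; [eapply transfer_K_der with (R := R_ab f e); eauto using R_ab_strip; exists A, B; eauto|].
    eapply eqv_trans; [apply fill_plug12|]. apply ceq_fill; [apply ceq_sym; auto|apply eqv_refl].
  - subst Z. eapply Der_eqv; [eapply transfer_inZ_der with (R := R_ab f e); eauto; exists A, B; eauto|].
    apply eqv_sym. eapply eqv_trans; [apply ceq_fill; [apply H3|apply eqv_refl]|].
    rewrite fill_ccomp. apply fill_eqv. simpl. esolve.
  - destruct X1 as [|x1 [|x2 X1']]; simpl in H1; inversion H1; [subst h u X2 | subst x1 h u X2 |]; clear H1.
    +
      eapply Der_eqv with (s := fill (ccomp c (Down [] e (ccomp (Hole B) c3))) Z).
      2:{ rewrite fill_dd. apply fill_eqv, eqv_comp1. eapply eqv_trans; [apply eqv_app_comm|]. apply eqv_app; auto using eqv_sym. }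
      apply (Der_rule _ T); auto. intros t Ht. assert (HTt := HT t Ht).
      destruct t as [Zp|Zp|s0]; unfold inst in *.
      * rewrite fill_dd. eapply Der_eqv; [apply (IH' c [IComp f (fill c3 Zp); IComp e B]); [eexists _, _; split; reflexivity|]|].
        -- eapply Dh_eqv; [apply HTt|]. eapply eqv_trans; [apply ceq_fill; [apply H3|apply eqv_refl]|].
           rewrite fill_cd. apply fill_eqv. esolve.
        -- apply fill_eqv, eqv_comp1, eqv_app_comm.
      * rewrite fill_dd_down. eapply Der_eqv; [apply (IH' (down c) [IComp f (fill (down c3) Zp); IComp e (strip B)]); [eexists _, _; split; reflexivity|]|].
        -- eapply Dh_eqv; [apply HTt|]. eapply eqv_trans; [apply ceq_fill; [apply ceq_down, H3|apply eqv_refl]|].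
           rewrite fill_cd_down. apply fill_eqv. strip_simpl. esolve.
        -- apply fill_eqv, eqv_comp1, eqv_app_comm.
      * eapply Der_of; eauto.
    +
      eapply Der_eqv with (s := fill (ccomp c (Down [] e (ccomp (Hole A) c3))) Z).
      2:{ rewrite fill_dd. apply fill_eqv, eqv_comp1. apply eqv_app; auto using eqv_sym. }
      apply (Der_rule _ T); auto. intros t Ht. assert (HTt := HT t Ht).
      destruct t as [Zp|Zp|s0]; unfold inst in *.
      * rewrite fill_dd. apply (IH' c [IComp f A; IComp e (fill c3 Zp)]); [eexists _, _; split; reflexivity|].
        eapply Dh_eqv; [apply HTt|]. eapply eqv_trans; [apply ceq_fill; [apply H3|apply eqv_refl]|].
        rewrite fill_cd. apply fill_eqv. simpl. auto.
      * rewrite fill_dd_down. apply (IH' (down c) [IComp f (strip A); IComp e (fill (down c3) Zp)]); [eexists _, _; split; reflexivity|].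
        eapply Dh_eqv; [apply HTt|]. eapply eqv_trans; [apply ceq_fill; [apply ceq_down, H3|apply eqv_refl]|].
        rewrite fill_cd_down. apply fill_eqv. strip_simpl. auto.
      * eapply Der_of; eauto.
    + destruct X1'; discriminate.
  - destruct (two_comp_overlap _ _ _ _ _ _ _ _ _ H1 H2 H3 HL) as [h [D [other [y0 [-> [Hh [HX0 HZ0]]]]]]].
    destruct (comp_rule2 T [y0] h D [] HL) as [y1 [Ey [_ [_ Hr]]]]. inversion Ey; subst y1; clear Ey.
    destruct (ov_fill _ _ _ _ _ _ [IComp e (A ++ B)] H4 H5) as [F1 _].
    assert (F2 : forall W, fill c' W ~~ fill a (other :: E ++ W)).
    { intros W. destruct (ov_fill _ _ _ _ _ _ W H4 H5) as [_ F]. eapply eqv_trans; [apply F|].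
      apply fill_eqv. change (other :: E ++ W) with ([other] ++ E ++ W). apply eqv_app; auto. }
    assert (F1' : fill c [IComp e (A ++ B)] ~~ fill (ccomp a (Hole E)) [y0; IComp e (A ++ B)]).
    { eapply eqv_trans; [apply F1|]. rewrite fill_ch. apply fill_eqv. eapply eqv_trans; [apply eqv_app; [apply HZ0|apply eqv_refl]|]. esolve. }
    eapply Der_eqv; [|apply eqv_sym, F1'].
    destruct Hr as [[g0 [g [-> ->]]]|[g0 [g [-> ->]]]].
    +
      apply (Der_rule _ [TF [IIn g0; IOut e]; TF [IIn e; IOut g0]; TC [IIn (Box g0 g); IComp e (IIn g :: A ++ B)]]); [constructor|].
      intros t [<-|[<-|[<-|[]]]]; simpl.
      * destruct Hh as [[-> [HDD ->]]|[-> [HDD ->]]].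
        -- eapply eq_trans1; eauto. eapply Der_of, (HT (TF _)); simpl; auto.
        -- eapply Der_of, (HT (TF _)); simpl; auto.
      * destruct Hh as [[-> [HDD ->]]|[-> [HDD ->]]].
        -- eapply eq_trans2; eauto. eapply Der_of, (HT (TF _)); simpl; auto.
        -- eapply Der_of, (HT (TF _)); simpl; auto.
      * assert (HM := HT (TC [IIn (Box g0 g); IComp h (IIn g :: D)]) (or_intror (or_intror (or_introl eq_refl)))).
        simpl in HM. rewrite fill_ch.
        destruct Hh as [[-> [HDD ->]]|[-> [HDD ->]]].
        -- eapply Der_eqv; [apply (IH' (ccomp a (Hole (E ++ [IIn (Box g0 g)]))) [IComp f (IIn g :: D); IComp e B]); [eexists _, _; split; reflexivity|]|].
           ++ eapply Dh_eqv; [apply HM|]. eapply eqv_trans; [apply F2|]. rewrite fill_ch. apply fill_eqv. esolve.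
           ++ rewrite fill_ch. apply fill_eqv. rewrite <- app_assoc. apply eqv_app_r. simpl.
              apply eqv_cons; auto. apply eqv_comp1. apply eqv_cons; auto. apply eqv_app; auto.
        -- eapply Der_eqv; [apply (IH' (ccomp a (Hole (E ++ [IIn (Box g0 g)]))) [IComp f A; IComp e (IIn g :: D)]); [eexists _, _; split; reflexivity|]|].
           ++ eapply Dh_eqv; [apply HM|]. eapply eqv_trans; [apply F2|]. rewrite fill_ch. apply fill_eqv. esolve.
           ++ rewrite fill_ch. apply fill_eqv. rewrite <- app_assoc. apply eqv_app_r. simpl.
              apply eqv_cons; auto. apply eqv_comp1. eapply eqv_trans; [apply eqv_app_r; apply eqv_cons; [apply ie_refl|apply HDD]|]. esolve.
    +
      apply (Der_rule _ [TF [IIn g0; IOut e]; TF [IIn e; IOut g0]; TC [IComp e (IOut g :: A ++ B)]]); [constructor|].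
      intros t [<-|[<-|[<-|[]]]]; simpl.
      * destruct Hh as [[-> [HDD ->]]|[-> [HDD ->]]].
        -- eapply eq_trans1; eauto. eapply Der_of, (HT (TF _)); simpl; auto.
        -- eapply Der_of, (HT (TF _)); simpl; auto.
      * destruct Hh as [[-> [HDD ->]]|[-> [HDD ->]]].
        -- eapply eq_trans2; eauto. eapply Der_of, (HT (TF _)); simpl; auto.
        -- eapply Der_of, (HT (TF _)); simpl; auto.
      * assert (HM := HT (TC [IComp h (IOut g :: D)]) (or_intror (or_intror (or_introl eq_refl)))).
        simpl in HM. rewrite fill_ch.
        destruct Hh as [[-> [HDD ->]]|[-> [HDD ->]]].
        -- eapply Der_eqv; [apply (IH' (ccomp a (Hole E)) [IComp f (IOut g :: D); IComp e B]); [eexists _, _; split; reflexivity|]|].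
           ++ eapply Dh_eqv; [apply HM|]. eapply eqv_trans; [apply F2|]. rewrite fill_ch. apply fill_eqv. esolve.
           ++ rewrite fill_ch. apply fill_eqv. apply eqv_app_r. simpl.
              apply eqv_comp1. apply eqv_cons; auto. apply eqv_app; auto.
        -- eapply Der_eqv; [apply (IH' (ccomp a (Hole E)) [IComp f A; IComp e (IOut g :: D)]); [eexists _, _; split; reflexivity|]|].
           ++ eapply Dh_eqv; [apply HM|]. eapply eqv_trans; [apply F2|]. rewrite fill_ch. apply fill_eqv. esolve.
           ++ rewrite fill_ch. apply fill_eqv. apply eqv_app_r. simpl.
              apply eqv_comp1. eapply eqv_trans; [apply eqv_app_r; apply eqv_cons; [apply ie_refl|apply HDD]|]. esolve.
Qed.

Lemma item_out_or x : (exists f, x = IOut f) \/ (exists y, strip_item x = [y] /\ forall f, y <> IOut f).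
Proof.
  destruct x as [f|f|f u]; [right|left|right]; eauto.
  - exists (IIn f); split; [reflexivity|discriminate].
  - exists (IComp f (strip u)); split; [apply strip_item_comp|discriminate].
Qed.

Lemma strip_split s : forall A B, strip s ~~ A ++ B ->
  exists s1 s2, s ~~ s1 ++ s2 /\ strip s1 ~~ A /\ strip s2 ~~ B.
Proof.
  induction s as [|x s IH]; intros A B H.
  - rewrite strip_nil in H. apply eqv_nil_l in H. apply app_eq_nil in H as [-> ->].
    exists [], []; repeat split; auto using ceq_refl.
  - rewrite strip_cons in H. destruct (item_out_or x) as [[f ->]|[y [Hy _]]].
    + rewrite strip_item_out in H. simpl in H. destruct (IH _ _ H) as [s1 [s2 [H1 [H2 H3]]]].
      exists (IOut f :: s1), s2; repeat split; auto using ceq_refl.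
      * simpl. constructor; auto.
    + rewrite Hy in H. simpl in H.
      apply eqv_cons_app in H as [[A1 [y' [A2 [-> [Hy' HR]]]]]|[B1 [y' [B2 [-> [Hy' HR]]]]]].
      * rewrite app_assoc in HR. destruct (IH _ _ HR) as [s1 [s2 [H1 [H2 H3]]]].
        exists (x :: s1), s2; repeat split; auto using ceq_refl.
        -- simpl; constructor; auto.
        -- rewrite strip_cons, Hy. simpl. eapply eqv_trans; [apply eqv_cons; [apply Hy'|apply H2]|]. esolve.
      * assert (HR' : strip s ~~ (A ++ (B1 ++ B2))) by (eapply eqv_trans; [apply HR|]; esolve).
        destruct (IH _ _ HR') as [s1 [s2 [H1 [H2 H3]]]].
        exists s1, (x :: s2); repeat split; auto using ceq_refl.
        -- eapply eqv_trans; [apply eqv_cons; [apply ie_refl|apply H1]|]. esolve.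
        -- rewrite strip_cons, Hy. simpl. eapply eqv_trans; [apply eqv_cons; [apply Hy'|apply H3]|]. esolve.
Qed.

Lemma strip_single_inv E y : strip E ~~ [y] ->
  exists x O, E ~~ x :: O /\ strip O = [] /\ (exists y', strip_item x = [y'] /\ item_equiv y' y).
Proof.
  induction E as [|x E IH]; intros H.
  - rewrite strip_nil in H. apply eqv_length in H. discriminate.
  - rewrite strip_cons in H. destruct (item_out_or x) as [[f ->]|[z [Hz _]]].
    + rewrite strip_item_out in H. simpl in H. destruct (IH H) as [x' [O [H1 [H2 H3]]]].
      exists x', (IOut f :: O); split; [|split; [|auto]].
      * eapply eqv_trans; [apply eqv_cons; [apply ie_refl|apply H1]|]. apply se_swap.
      * rewrite strip_cons, strip_item_out, H2; auto.
    + rewrite Hz in H. simpl in H. apply single_eqv2 in H as [H1 H2].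
      exists x, E; split; [auto|split; [auto|eauto]].
Qed.

Lemma strip_single_in E f : strip E ~~ [IIn f] -> exists O, E ~~ IIn f :: O /\ strip O = [].
Proof.
  intros H; destruct (strip_single_inv _ _ H) as [x [O [H1 [H2 [y' [H3 H4]]]]]].
  apply ie_sym, ie_in_inv in H4; subst.
  destruct x as [g|g|g u]; [rewrite strip_item_in in H3|rewrite strip_item_out in H3|rewrite strip_item_comp in H3];
    inversion H3; subst. eauto.
Qed.

Lemma strip_single_comp E p v : strip E ~~ [IComp p v] ->
  exists u O, E ~~ IComp p u :: O /\ strip O = [] /\ strip u ~~ v.
Proof.
  intros H; destruct (strip_single_inv _ _ H) as [x [O [H1 [H2 [y' [H3 H4]]]]]].
  apply ie_sym, ie_comp_inv in H4 as [w [-> Hw]].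
  destruct x as [g|g|g u]; [rewrite strip_item_in in H3|rewrite strip_item_out in H3|rewrite strip_item_comp in H3];
    inversion H3; subst. exists u, O; repeat split; auto using ceq_refl. apply eqv_sym; auto.
Qed.

Lemma US_fill d : forall s X, strip s ~~ fill d X ->
  exists c X', s ~~ fill c X' /\ ceq (down c) d /\ strip X' ~~ X.
Proof.
  induction d as [D|D p d0 IH]; intros s X H; simpl in H.
  - destruct (strip_split _ _ _ H) as [s1 [s2 [H1 [H2 H3]]]].
    exists (Hole s1), s2; simpl; auto.
  - destruct (strip_split _ _ _ H) as [s1 [s2 [H1 [H2 H3]]]].
    destruct (strip_single_comp _ _ _ H3) as [u [O [H4 [H5 H6]]]].
    destruct (IH _ _ H6) as [c0 [X' [H7 [H8 H9]]]].
    exists (Down (s1 ++ O) p c0), X'; simpl; repeat split; auto using ceq_refl.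
    + eapply eqv_trans; [apply H1|]. eapply eqv_trans; [apply eqv_app_r, H4|].
      eapply eqv_trans; [apply eqv_app_r, eqv_cons; [apply ie_comp, H7|apply eqv_refl]|]. esolve.
    + rewrite strip_app, H5, app_nil_r; auto.
Qed.

Lemma US_ccomp d1 : forall d2 c, ceq (down c) (ccomp d1 d2) ->
  exists c1 c2, ceq c (ccomp c1 c2) /\ ceq (down c1) d1 /\ ceq (down c2) d2.
Proof.
  induction d1 as [D1|D1 p d1' IH]; intros d2 c H.
  - destruct d2 as [D2|D2 p d3]; destruct c as [Dc|Dc q c0]; simpl in H; try contradiction.
    + destruct (strip_split _ _ _ H) as [s1 [s2 [H1 [H2 H3]]]].
      exists (Hole s1), (Hole s2); simpl; repeat split; auto using ceq_refl.
    + destruct H as [H [-> H']].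
      destruct (strip_split _ _ _ H) as [s1 [s2 [H1 [H2 H3]]]].
      exists (Hole s1), (Down s2 p c0); simpl; repeat split; auto using ceq_refl.
  - destruct c as [Dc|Dc q c0]; simpl in H; try contradiction.
    destruct H as [H [-> H']]. destruct (IH _ _ H') as [c1 [c2 [H1 [H2 H3]]]].
    exists (Down Dc p c1), c2; simpl; repeat split; auto using ceq_refl.
Qed.

Lemma US_plug2 K : forall c Z, ceq (down c) (plug2 K Z) ->
  exists K' Z', ceq c (plug2 K' Z') /\ ceq2 (down2 K') K /\ strip Z' ~~ Z.
Proof.
  induction K as [D|D p c0|D p c0|D p1 c1 p2 c2|D p K0 IH]; intros c Z H;
    destruct c as [Dc|Dc q c']; simpl in H; try contradiction.
  - destruct (strip_split _ _ _ H) as [s1 [s2 [H1 [H2 H3]]]].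
    exists (KN s1), s2; simpl; repeat split; auto using ceq_refl.
  - destruct (strip_split _ _ _ H) as [s1 [s2 [H1 [H2 H3]]]].
    destruct (strip_single_comp _ _ _ H3) as [u [O [H4 [H5 H6]]]].
    destruct (US_fill _ _ _ H6) as [c0' [Z' [H7 [H8 H9]]]].
    exists (KL (s1 ++ O) p c0'), Z'; simpl; repeat split; auto using ceq_refl.
    + eapply eqv_trans; [apply H1|]. eapply eqv_trans; [apply eqv_app_r, H4|].
      eapply eqv_trans; [apply eqv_app_r, eqv_cons; [apply ie_comp, H7|apply eqv_refl]|]. esolve.
    + rewrite strip_app, H5, app_nil_r; auto.
  - destruct H as [H [-> H']].
    destruct (strip_split _ _ _ H) as [s1 [s2 [H1 [H2 H3]]]].
    exists (KR s1 p c'), s2; simpl; repeat split; auto using ceq_refl.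
  - destruct H as [H [-> H']].
    destruct (strip_split _ _ _ H) as [s1 [s2 [H1 [H2 H3]]]].
    destruct (strip_single_comp _ _ _ H3) as [u [O [H4 [H5 H6]]]].
    destruct (US_fill _ _ _ H6) as [c2' [Z' [H7 [H8 H9]]]].
    exists (KS (s1 ++ O) p1 c' p2 c2'), Z'; simpl; repeat split; auto using ceq_refl.
    + eapply eqv_trans; [apply H1|]. eapply eqv_trans; [apply eqv_app_r, H4|].
      eapply eqv_trans; [apply eqv_app_r, eqv_cons; [apply ie_comp, H7|apply eqv_refl]|]. esolve.
    + rewrite strip_app, H5, app_nil_r; auto.
  - destruct H as [H [-> H']]. destruct (IH _ _ H') as [K' [Z' [H1 [H2 H3]]]].
    exists (KD Dc p K'), Z'; simpl; repeat split; auto using ceq_refl.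
Qed.

Definition Lift (Z Zp : seqnt) := forall n e, Dh n (fill e Z) -> Dh n (fill e Zp).

Definition CutIH (xi : form) (m : nat) := forall a b c, a + b < m ->
  Dh a (fill (down c) [IOut xi]) -> Dh b (fill c [IIn xi]) -> Der (fill c []).

Lemma fill_plug21 K A B : fill (plug2 K B) A ~~ fill (plug1 K A) B.
Proof. apply eqv_sym, fill_plug12. Qed.

Lemma lift_refl Z : Lift Z Z. Proof. intros n e H; auto. Qed.
Lemma lift_eqv Z Z' : Z ~~ Z' -> Lift Z Z'.
Proof. intros H n e HD. eapply Dh_eqv; [apply HD|]. apply fill_eqv; auto. Qed.
Lemma lift_inv phi Y : InvPair phi Y -> Lift [IIn phi] Y.
Proof. intros HP n e HD. eapply invert; eauto. Qed.
Lemma lift_weak Z W : Lift Z (Z ++ W).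
Proof. intros n e HD. apply weaken; auto. Qed.
Lemma lift_comp_weak y h D w : Lift [y; IComp h D] [y; IComp h (w :: D)].
Proof.
  intros n e HD.
  assert (E1 : forall V, fill (ccomp e (Down [y] h (Hole D))) V = fill e [y; IComp h (D ++ V)]) by (intros; rewrite fill_ccomp; reflexivity).
  eapply Dh_eqv; [|apply fill_eqv, eqv_cons; [apply ie_refl|apply eqv_comp1; apply (eqv_app_comm D [w])]].
  rewrite <- E1. change [w] with ([] ++ [w]). apply weaken_eqv with (s := fill e [y; IComp h D]); auto.
  rewrite E1, app_nil_r; auto.
Qed.

Lemma lift_strip_rule T Z : lrule T Z -> forall Zp, (In (TC Zp) T \/ In (TD Zp) T) -> Lift (strip Z) (strip Zp).
Proof.
  intros HL Zp HZ. inversion HL; subst; simpl in HZ;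
  repeat match goal with
  | H : _ \/ _ |- _ => destruct H as [H|H]
  | H : TC _ = TC _ |- _ => inversion H; subst; clear H
  | H : TD _ = TD _ |- _ => inversion H; subst; clear H
  | H : False |- _ => contradiction
  | H : _ = _ |- _ => discriminate H
  end; strip_simpl;
  try apply lift_refl;
  try (apply lift_inv; constructor);
  try (apply (lift_weak [])).
  apply lift_comp_weak.
Qed.

Lemma Der_axiom_bot c : Der (fill c [IIn Bot]).
Proof. apply (Der_rule c []); [constructor|intros t []]. Qed.

Lemma cut_R_perm_K xi a b c cR T Z K :
  CutIH xi (a + S b) -> lrule T Z -> ceq c (plug2 K Z) -> ceq cR (plug1 K [IIn xi]) ->
  (forall t, In t T -> Dh b (inst cR t)) -> Dh a (fill (down c) [IOut xi]) -> Der (fill c []).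
Proof.
  intros IH HL H1 H2 HT HLd.
  assert (HL0 : Dh a (fill (plug1 (down2 K) [IOut xi]) (strip Z))).
  { eapply Dh_eqv; [apply HLd|]. eapply eqv_trans; [apply ceq_fill; [apply ceq_down, H1|apply eqv_refl]|].
    rewrite down_plug2. apply fill_plug21. }
  apply Der_eqv with (fill (plug1 K []) Z).
  2:{ eapply eqv_trans; [apply fill_plug12|]. apply ceq_fill; [apply ceq_sym; auto|apply eqv_refl]. }
  apply (Der_rule _ T); auto. intros t Ht. assert (HTt := HT t Ht).
  assert (Hlift : forall Zp, (In (TC Zp) T \/ In (TD Zp) T) ->
            Dh a (fill (down (plug2 (down2 K) Zp)) [IOut xi]) /\ Dh a (fill (down (plug2 K Zp)) [IOut xi])).
  { intros Zp HZp. assert (HLf := lift_strip_rule _ _ HL _ HZp _ _ HL0).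
    rewrite !down_plug2, down2_down2. split; eapply Dh_eqv; try apply HLf; apply fill_plug12. }
  destruct t as [Zp|Zp|s]; unfold inst in *.
  - apply Der_eqv with (fill (plug2 K Zp) []); [|apply eqv_sym, fill_plug12].
    apply (IH a b); [lia| apply Hlift; auto|].
    eapply Dh_eqv; [apply HTt|]. eapply eqv_trans; [apply ceq_fill; [apply H2|apply eqv_refl]|]. apply fill_plug12.
  - rewrite down_plug1. simpl.
    apply Der_eqv with (fill (plug2 (down2 K) Zp) []); [|apply eqv_sym, fill_plug12].
    apply (IH a b); [lia| apply Hlift; auto|].
    eapply Dh_eqv; [apply HTt|]. eapply eqv_trans; [apply ceq_fill; [apply ceq_down, H2|apply eqv_refl]|].
    rewrite down_plug1. strip_simpl. apply fill_plug12.
  - exists b; auto.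
Qed.

Lemma fill_cdh c W h w c3 V : fill (ccomp c (Down W h (ccomp (Hole [w]) c3))) V = fill c (W ++ [IComp h (w :: fill c3 V)]).
Proof. rewrite fill_ccomp; simpl; destruct c3; reflexivity. Qed.
Lemma fill_cdh_down c W h w c3 V : fill (down (ccomp c (Down W h (ccomp (Hole [w]) c3)))) V =
  fill (down c) (strip W ++ [IComp h (strip_item w ++ fill (down c3) V)]).
Proof. rewrite down_ccomp, fill_ccomp; simpl; destruct c3; simpl; strip_simpl; rewrite ?app_assoc; reflexivity. Qed.

Lemma cut_R_perm_inZ xi a b c cR T Z1 h u Z2 c3 :
  CutIH xi (a + S b) -> lrule T (Z1 ++ IComp h u :: Z2) -> u ~~ fill c3 [IIn xi] ->
  ceq c (ccomp cR (Down (Z1 ++ Z2) h c3)) -> (forall t, In t T -> Dh b (inst cR t)) ->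
  Dh a (fill (down c) [IOut xi]) -> Der (fill c []).
Proof.
  intros IH HL Hu H1 HT HLd.
  destruct (comp_rule2 _ _ _ _ _ HL) as [y0 [-> [-> [_ [[g0 [g [-> ->]]]|[g0 [g [-> ->]]]]]]]].
  - apply Der_eqv with (fill cR [IIn (Box g0 g); IComp h (fill c3 [])]).
    2:{ apply eqv_sym. eapply eqv_trans; [apply ceq_fill; [apply H1|apply eqv_refl]|]. rewrite fill_cd. simpl; auto. }
    apply (Der_rule _ [TF [IIn g0; IOut h]; TF [IIn h; IOut g0]; TC [IIn (Box g0 g); IComp h (IIn g :: fill c3 [])]]); [constructor|].
    intros t [<-|[<-|[<-|[]]]]; unfold inst.
    + exists b; apply (HT (TF _)); simpl; auto.
    + exists b; apply (HT (TF _)); simpl; auto.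
    + assert (HM := HT _ (or_intror (or_intror (or_introl eq_refl)))). unfold inst in HM.
      set (cn := ccomp cR (Down [IIn (Box g0 g)] h (ccomp (Hole [IIn g]) c3))).
      assert (E1 : fill cn [] = fill cR [IIn (Box g0 g); IComp h (IIn g :: fill c3 [])]) by (unfold cn; rewrite fill_cdh; reflexivity).
      rewrite <- E1. apply (IH a b); [lia| |].
      * unfold cn. rewrite fill_cdh_down. strip_simpl.
        apply lift_comp_weak. eapply Dh_eqv; [apply HLd|].
        eapply eqv_trans; [apply ceq_fill; [apply ceq_down, H1|apply eqv_refl]|]. rewrite fill_cd_down. strip_simpl. auto.
      * unfold cn. rewrite fill_cdh. eapply Dh_eqv; [apply HM|]. apply fill_eqv. simpl.
        apply eqv_cons; auto. apply eqv_comp1. apply eqv_cons; auto.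
  - apply Der_eqv with (fill cR [IOut (Dia g0 g); IComp h (fill c3 [])]).
    2:{ apply eqv_sym. eapply eqv_trans; [apply ceq_fill; [apply H1|apply eqv_refl]|]. rewrite fill_cd. simpl; auto. }
    apply (Der_rule _ [TF [IIn g0; IOut h]; TF [IIn h; IOut g0]; TC [IComp h (IOut g :: fill c3 [])]]); [constructor|].
    intros t [<-|[<-|[<-|[]]]]; unfold inst.
    + exists b; apply (HT (TF _)); simpl; auto.
    + exists b; apply (HT (TF _)); simpl; auto.
    + assert (HM := HT _ (or_intror (or_intror (or_introl eq_refl)))). unfold inst in HM.
      set (cn := ccomp cR (Down [] h (ccomp (Hole [IOut g]) c3))).
      assert (E1 : fill cn [] = fill cR [IComp h (IOut g :: fill c3 [])]) by (unfold cn; rewrite fill_cdh; reflexivity).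
      rewrite <- E1. apply (IH a b); [lia| |].
      * unfold cn. rewrite fill_cdh_down. strip_simpl.
        eapply Dh_eqv; [apply HLd|].
        eapply eqv_trans; [apply ceq_fill; [apply ceq_down, H1|apply eqv_refl]|]. rewrite fill_cd_down. strip_simpl. auto.
      * unfold cn. rewrite fill_cdh. eapply Dh_eqv; [apply HM|]. apply fill_eqv. simpl.
        apply eqv_comp1. apply eqv_cons; auto.
Qed.

Lemma cut_L_perm_K xi a b c K K' O T' Zc :
  CutIH xi (S a + b) -> lrule T' Zc -> strip O = [] -> ceq c (plug2 K' (Zc ++ O)) ->
  ceq2 (down2 K') K -> nc2 K = 0 -> Dh b (fill c [IIn xi]) ->
  (forall Zp, In (TC Zp) T' -> Dh a (fill (plug1 K [IOut xi]) (strip Zp)) /\ Lift Zc Zp) ->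
  (forall Zp, In (TD Zp) T' -> Der (fill (plug1 K []) Zp)) ->
  (forall s, In (TF s) T' -> Der s) -> Der (fill c []).
Proof.
  intros IH HL HO H1 H2 H3 HR HTC HTD HTF.
  set (ct := ccomp (plug1 K' []) (Hole O)).
  assert (Ect : forall V, fill ct V = fill (plug1 K' []) (O ++ V)) by (intros; unfold ct; rewrite fill_ccomp; reflexivity).
  apply Der_eqv with (fill ct Zc).
  2:{ rewrite Ect. eapply eqv_trans; [apply fill_plug12|]. apply ceq_fill; [|auto].
      eapply ceq_trans; [apply ceq2_plug2; [apply ceq2_refl|apply eqv_app_comm]| apply ceq_sym, H1]. }
  apply (Der_rule _ T'); auto. intros t Ht. destruct t as [Zp|Zp|s]; unfold inst.
  - destruct (HTC Zp Ht) as [HLp Hlift].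
    rewrite Ect. apply Der_eqv with (fill (plug2 K' (O ++ Zp)) []); [|apply fill_plug21].
    apply (IH a b); [lia| |].
    + rewrite down_plug2, strip_app, HO. simpl. eapply Dh_eqv; [apply HLp|].
      eapply eqv_trans; [apply fill_plug12|]. apply ceq_fill; [apply ceq2_plug2; [apply ceq2_sym; auto|auto]|auto].
    + set (cr := ccomp (plug1 K' [IIn xi]) (Hole O)).
      assert (Ecr : forall V, fill cr V = fill (plug1 K' [IIn xi]) (O ++ V)) by (intros; unfold cr; rewrite fill_ccomp; reflexivity).
      eapply Dh_eqv; [|apply fill_plug12]. rewrite <- Ecr. apply Hlift. rewrite Ecr.
      eapply Dh_eqv; [apply HR|]. eapply eqv_trans; [apply ceq_fill; [apply H1|apply eqv_refl]|].
      eapply eqv_trans; [apply fill_plug21|]. apply fill_eqv, eqv_app_comm.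
  - assert (HD := HTD Zp Ht). eapply Der_eqv; [apply HD|].
    unfold ct. rewrite down_ccomp, fill_ccomp, down_plug1. simpl. rewrite HO, strip_nil. simpl.
    apply ceq_fill; [apply ceq2_plug1; [apply ceq2_sym; auto|auto]|auto].
  - apply HTF; auto.
Qed.

Lemma cut_L_perm_inZ xi a b c cL T Z1 h u Z2 c3 :
  CutIH xi (S a + b) -> lrule T (Z1 ++ IComp h u :: Z2) -> u ~~ fill c3 [IOut xi] ->
  ceq (down c) (ccomp cL (Down (Z1 ++ Z2) h c3)) -> (forall t, In t T -> Dh a (inst cL t)) ->
  Dh b (fill c [IIn xi]) -> Der (fill c []).
Proof.
  intros IH HL Hu H1 HT HR.
  destruct (comp_rule2 _ _ _ _ _ HL) as [y0 [-> [-> [_ [[g0 [g [-> ->]]]|[g0 [g [-> ->]]]]]]]].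
  2:{ exfalso. apply ceq_nc in H1. rewrite nc_down, nc_ccomp in H1. simpl in H1.
      rewrite ?nouts_cons, ?nouts_single, ?nouts_item_out in H1. lia. }
  simpl in H1. destruct (US_ccomp _ _ _ H1) as [c1 [c2 [H2 [H3 H4]]]].
  destruct c2 as [W|W h' c3']; simpl in H4; [contradiction|]. destruct H4 as [H4 [Eh H5]]; subst h'.
  destruct (strip_single_in _ _ H4) as [O [H6 H7]].
  set (cc := ccomp c1 (Hole O)).
  assert (Ecc : forall V, fill cc V = fill c1 (O ++ V)) by (intros; unfold cc; rewrite fill_ccomp; reflexivity).
  assert (Ec : forall V, fill c V ~~ fill cc [IIn (Box g0 g); IComp h (fill c3' V)]).
  { intros V. eapply eqv_trans; [apply ceq_fill; [apply H2|apply eqv_refl]|].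
    rewrite fill_cd, Ecc. apply fill_eqv. eapply eqv_trans; [apply eqv_app; [apply H6|apply eqv_refl]|]. esolve. }
  apply Der_eqv with (fill cc [IIn (Box g0 g); IComp h (fill c3' [])]); [|apply eqv_sym, Ec].
  apply (Der_rule _ [TF [IIn g0; IOut h]; TF [IIn h; IOut g0]; TC [IIn (Box g0 g); IComp h (IIn g :: fill c3' [])]]); [constructor|].
  intros t [<-|[<-|[<-|[]]]]; unfold inst.
  - exists a; apply (HT (TF _)); simpl; auto.
  - exists a; apply (HT (TF _)); simpl; auto.
  - assert (HM := HT _ (or_intror (or_intror (or_introl eq_refl)))). unfold inst in HM.
    set (cn := ccomp cc (Down [IIn (Box g0 g)] h (ccomp (Hole [IIn g]) c3'))).
    assert (E1 : fill cn [] = fill cc [IIn (Box g0 g); IComp h (IIn g :: fill c3' [])]) by (unfold cn; rewrite fill_cdh; reflexivity).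
    rewrite <- E1. apply (IH a b); [lia| |].
    + unfold cn. rewrite fill_cdh_down. unfold cc. rewrite down_ccomp, fill_ccomp. simpl. rewrite H7. simpl.
      strip_simpl. eapply Dh_eqv; [apply HM|].
      eapply eqv_trans; [|apply ceq_fill; [apply ceq_sym, H3|apply eqv_refl]].
      apply fill_eqv. apply eqv_cons; auto. apply eqv_comp1. apply eqv_cons; auto.
      eapply eqv_trans; [apply Hu|]. apply ceq_fill; [apply ceq_sym, H5|auto].
    + unfold cn. rewrite fill_cdh. simpl. apply lift_comp_weak.
      eapply Dh_eqv; [apply HR|]. apply Ec.
Qed.

Lemma prin_out T Z xi Z0 : lrule T Z -> Z ~~ IOut xi :: Z0 ->
  match xi with
  | Var p => T = [] /\ Z0 ~~ [IIn (Var p)]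
  | Bot => False
  | And f g => T = [TC [IOut f]; TC [IOut g]] /\ Z0 = []
  | Or f g => (T = [TC [IOut f]] \/ T = [TC [IOut g]]) /\ Z0 = []
  | Imp f g => T = [TC [IIn f; IOut g]] /\ Z0 = []
  | Box f g => T = [TC [IComp f [IOut g]]] /\ Z0 = []
  | Dia f g => exists e D, T = [TF [IIn f; IOut e]; TF [IIn e; IOut f]; TC [IComp e (IOut g :: D)]] /\ Z0 ~~ [IComp e D]
  end.
Proof.
  intros HL H. apply eqv_sym, eqv_cons_inv in H as [Z1 [y [Z2 [E [Hy HZ]]]]].
  apply ie_out_inv in Hy; subst y.
  subst Z. inversion HL; subst;
  match goal with H : _ = Z1 ++ _ :: Z2 |- _ => rename H into E end;
  destruct Z1 as [|? [|? [|]]]; simpl in E; inversion E; subst; simpl in *;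
  try (apply eqv_nil_r in HZ; subst); repeat split; auto; eauto.
Qed.

Lemma prin_in T Z xi Z0 : lrule T Z -> Z ~~ IIn xi :: Z0 ->
  match xi with
  | Var p => T = [] /\ Z0 ~~ [IOut (Var p)]
  | Bot => T = [] /\ Z0 = []
  | And f g => T = [TC [IIn f; IIn g]] /\ Z0 = []
  | Or f g => T = [TC [IIn f]; TC [IIn g]] /\ Z0 = []
  | Imp f g => T = [TD [IIn (Imp f g); IOut f]; TC [IIn g]] /\ Z0 = []
  | Box f g => exists e D, T = [TF [IIn f; IOut e]; TF [IIn e; IOut f]; TC [IIn (Box f g); IComp e (IIn g :: D)]] /\ Z0 ~~ [IComp e D]
  | Dia f g => T = [TC [IComp f [IIn g]]] /\ Z0 = []
  end.
Proof.
  intros HL H. apply eqv_sym, eqv_cons_inv in H as [Z1 [y [Z2 [E [Hy HZ]]]]].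
  apply ie_in_inv in Hy; subst y.
  subst Z. inversion HL; subst;
  match goal with H : _ = Z1 ++ _ :: Z2 |- _ => rename H into E end;
  destruct Z1 as [|? [|? [|]]]; simpl in E; inversion E; subst; simpl in *;
  try (apply eqv_nil_r in HZ; subst); repeat split; auto; eauto.
Qed.

Lemma ov_eqs c a1 Z0 E1 cR : ceq c (ccomp a1 (Hole (Z0 ++ E1))) -> ceq cR (ccomp a1 (Hole E1)) ->
  (forall Y, fill c Y ~~ fill cR (Z0 ++ Y)) /\ (forall Y, fill (down c) Y ~~ fill (down cR) (strip Z0 ++ Y)).
Proof.
  intros H1 H2; split; intros Y.
  - eapply eqv_trans; [apply ceq_fill; [apply H1|apply eqv_refl]|].
    eapply eqv_trans; [|apply ceq_fill; [apply ceq_sym, H2|apply eqv_refl]].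
    rewrite !fill_ch. apply fill_eqv. esolve.
  - eapply eqv_trans; [apply ceq_fill; [apply ceq_down, H1|apply eqv_refl]|].
    eapply eqv_trans; [|apply ceq_fill; [apply ceq_sym, ceq_down, H2|apply eqv_refl]].
    rewrite !down_ccomp, !fill_ccomp. simpl. apply fill_eqv. rewrite strip_app. esolve.
Qed.

Lemma Lprem a' cL K xi Zp Zp' : ceq cL (plug1 K [IOut xi]) -> Dh a' (fill cL Zp) -> Zp ~~ strip Zp' ->
  Dh a' (fill (plug1 K [IOut xi]) (strip Zp')).
Proof. intros H1 H2 H3. eapply Dh_eqv; [apply H2|]. apply ceq_fill; auto. Qed.

Lemma Lprem_down a' cL K xi Zp : nc2 K = 0 -> ceq cL (plug1 K [IOut xi]) -> Dh a' (fill (down cL) Zp) ->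
  Der (fill (plug1 K []) Zp).
Proof.
  intros H0 H1 H2. exists a'. eapply Dh_eqv; [apply H2|]. apply ceq_fill; auto.
  eapply ceq_trans; [apply ceq_down, H1|]. rewrite down_plug1. strip_simpl.
  apply ceq2_plug1; auto. apply down2_nc0; auto.
Qed.

Lemma L_K_case xi a' b c cL TL ZL K :
  CutIH xi (S a' + b) -> lrule TL ZL -> ceq (down c) (plug2 K ZL) -> ceq cL (plug1 K [IOut xi]) ->
  (forall t, In t TL -> Dh a' (inst cL t)) -> Dh b (fill c [IIn xi]) -> Der (fill c []).
Proof.
  intros IH HL H1 H2 HT HR.
  assert (Hnc := ceq_nc _ _ H1). rewrite nc_down, nc_plug2 in Hnc.
  assert (HK : nc2 K = 0) by lia.
  destruct (US_plug2 _ _ _ H1) as [K' [Z' [H6 [H7 H8]]]].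
  inversion HL; subst; rewrite ?nouts_cons, ?nouts_single, ?nouts_item_in, ?nouts_item_out, ?nouts_nil, ?nouts_item_comp in Hnc; try lia.
  -
    destruct (strip_single_in _ _ H8) as [O [HZ' HO]].
    apply Der_eqv with (fill (ccomp (plug1 K' []) (Hole O)) [IIn Bot]); [apply Der_axiom_bot|].
    rewrite fill_ch. eapply eqv_trans; [apply fill_plug12|]. apply ceq_fill; [|auto].
    apply ceq_sym. eapply ceq_trans; [apply H6|]. apply ceq2_plug2; [apply ceq2_refl|].
    eapply eqv_trans; [apply HZ'|]. esolve.
  -
    destruct (strip_single_in _ _ H8) as [O [HZ' HO]].
    apply (cut_L_perm_K xi a' b c K K' O _ _ IH (l_andL f g) HO); auto.
    + eapply ceq_trans; [apply H6|]. apply ceq2_plug2; [apply ceq2_refl|auto].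
    + intros Zp HZ0; assert (HTZ := HT (TC Zp) HZ0); destruct HZ0 as [HZ|[]]; inversion HZ; subst. split; [|apply lift_inv; constructor].
      eapply Lprem; [apply H2|apply HTZ|]. strip_simpl; auto.
    + intros Zp [HZ|[]]; discriminate.
    + intros s [HZ|[]]; discriminate.
  -
    destruct (strip_single_in _ _ H8) as [O [HZ' HO]].
    apply (cut_L_perm_K xi a' b c K K' O _ _ IH (l_orL f g) HO); auto.
    + eapply ceq_trans; [apply H6|]. apply ceq2_plug2; [apply ceq2_refl|auto].
    + intros Zp HZ0; assert (HTZ := HT (TC Zp) HZ0); destruct HZ0 as [HZ|[HZ|[]]]; inversion HZ; subst.
      * split; [|apply lift_inv; constructor].
        eapply Lprem; [apply H2|apply HTZ|]. strip_simpl; auto.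
      * split; [|apply lift_inv; constructor].
        eapply Lprem; [apply H2|apply HTZ|]. strip_simpl; auto.
    + intros Zp [HZ|[HZ|[]]]; discriminate.
    + intros s [HZ|[HZ|[]]]; discriminate.
  -
    destruct (strip_single_in _ _ H8) as [O [HZ' HO]].
    apply (cut_L_perm_K xi a' b c K K' O _ _ IH (l_impL f g) HO); auto.
    + eapply ceq_trans; [apply H6|]. apply ceq2_plug2; [apply ceq2_refl|auto].
    + intros Zp HZ0; assert (HTZ := HT (TC Zp) HZ0); destruct HZ0 as [HZ|[HZ|[]]]; inversion HZ; subst. split; [|apply lift_inv; constructor].
      eapply Lprem; [apply H2|apply HTZ|]. strip_simpl; auto.
    + intros Zp [HZ|[HZ|[]]]; inversion HZ; subst.
      eapply Lprem_down; eauto. apply (HT (TD _)); simpl; auto.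
    + intros s [HZ|[HZ|[]]]; discriminate.
  -
    destruct (strip_split Z' [IIn (Box f g)] [IComp e D] H8) as [s1 [s2 [HZ1 [HZ2 HZ3]]]].
    destruct (strip_single_in _ _ HZ2) as [O1 [HO1 HO1']].
    destruct (strip_single_comp _ _ _ HZ3) as [D' [O2 [HO2 [HO2' HD']]]].
    apply (cut_L_perm_K xi a' b c K K' (O1 ++ O2) _ _ IH (l_boxL f g e D')); auto.
    + rewrite strip_app, HO1', HO2'; auto.
    + eapply ceq_trans; [apply H6|]. apply ceq2_plug2; [apply ceq2_refl|].
      eapply eqv_trans; [apply HZ1|]. eapply eqv_trans; [apply eqv_app; [apply HO1|apply HO2]|]. esolve.
    + intros Zp [HZ|[HZ|[HZ|[]]]]; inversion HZ; subst. split; [|apply lift_comp_weak].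
      eapply Lprem; [apply H2|apply (HT (TC [IIn (Box f g); IComp e (IIn g :: D)])); simpl; auto|]. strip_simpl.
      apply eqv_cons; auto. apply eqv_comp1. apply eqv_cons; auto. apply eqv_sym; auto.
    + intros Zp [HZ|[HZ|[HZ|[]]]]; discriminate.
    + intros s [HZ|[HZ|[HZ|[]]]]; inversion HZ; subst; exists a'; apply (HT (TF _)); simpl; auto.
  -
    destruct (strip_single_in _ _ H8) as [O [HZ' HO]].
    apply (cut_L_perm_K xi a' b c K K' O _ _ IH (l_diaL f g) HO); auto.
    + eapply ceq_trans; [apply H6|]. apply ceq2_plug2; [apply ceq2_refl|auto].
    + intros Zp HZ0; assert (HTZ := HT (TC Zp) HZ0); destruct HZ0 as [HZ|[]]; inversion HZ; subst. split; [|apply lift_inv; constructor].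
      eapply Lprem; [apply H2|apply HTZ|]. strip_simpl; auto.
    + intros Zp [HZ|[]]; discriminate.
    + intros s [HZ|[]]; discriminate.
Qed.

Definition SubCut (xi : form) : Prop :=
  match xi with
  | And f g | Or f g | Imp f g | Box f g | Dia f g => CutAdm f /\ CutAdm g
  | _ => True
  end.

Lemma Der_of' n s s' : Dh n s -> s ~~ s' -> Der s'.
Proof. intros; exists n; eapply Dh_eqv; eauto. Qed.

Lemma fill_ch_down a W V : fill (down (ccomp a (Hole W))) V = fill (down a) (strip W ++ V).
Proof. rewrite down_ccomp, fill_ccomp; reflexivity. Qed.

Lemma fill_cde c e D V : fill (ccomp c (Down [] e (Hole D))) V = fill c [IComp e (D ++ V)].
Proof. rewrite fill_ccomp; reflexivity. Qed.
Lemma fill_cde_down c e D V : fill (down (ccomp c (Down [] e (Hole D)))) V = fill (down c) [IComp e (strip D ++ V)].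
Proof. rewrite down_ccomp, fill_ccomp; reflexivity. Qed.

Lemma prin_combo xi a' b' c cL TL ZL cR TR ZR Z0 ZR0 a0 E a1 E1 :
  SubCut xi -> CutIH xi (S a' + S b') -> Dh (S a') (fill (down c) [IOut xi]) -> Dh (S b') (fill c [IIn xi]) ->
  lrule TL ZL -> ZL ~~ IOut xi :: Z0 -> ceq (down c) (ccomp a0 (Hole (Z0 ++ E))) -> ceq cL (ccomp a0 (Hole E)) ->
  (forall t, In t TL -> Dh a' (inst cL t)) ->
  lrule TR ZR -> ZR ~~ IIn xi :: ZR0 -> ceq c (ccomp a1 (Hole (ZR0 ++ E1))) -> ceq cR (ccomp a1 (Hole E1)) ->
  (forall t, In t TR -> Dh b' (inst cR t)) -> Der (fill c []).
Proof.
  intros HS IH HLd HRd HLr HZL H4 H5 HTL HRr HZR H4' H5' HTR.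
  destruct (ov_eqs _ _ _ _ _ H4 H5) as [FL _].
  destruct (ov_eqs _ _ _ _ _ H4' H5') as [FR FRd].
  assert (PL := prin_out _ _ _ _ HLr HZL). assert (PR := prin_in _ _ _ _ HRr HZR).
  destruct xi as [p| |f g|f g|f g|f g|f g].
  -
    destruct PR as [-> HZ0]. exists (S a').
    apply Dh_eqv with (fill cR [IOut (Var p)]).
    2:{ apply eqv_sym. eapply eqv_trans; [apply FR|]. rewrite app_nil_r; apply fill_eqv; auto. }
    apply restore0. eapply Dh_eqv; [apply HLd|]. eapply eqv_trans; [apply FRd|].
    apply strip_eqv in HZ0. rewrite strip_cons, strip_item_out, strip_nil in HZ0. apply eqv_nil_r in HZ0.
    rewrite HZ0. simpl. auto.
  - contradiction.
  -
    destruct HS as [Cf Cg]. destruct PL as [-> ->]. destruct PR as [-> ->].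
    assert (HLf : Der (fill (down c) [IOut f])) by (eapply Der_of'; [apply (HTL (TC [IOut f])); simpl; auto|]; apply eqv_sym, FL).
    assert (HLg : Der (fill (down c) [IOut g])) by (eapply Der_of'; [apply (HTL (TC [IOut g])); simpl; auto|]; apply eqv_sym, FL).
    assert (HR : Der (fill c [IIn f; IIn g])) by (eapply Der_of'; [apply (HTR (TC [IIn f; IIn g])); simpl; auto|]; apply eqv_sym, FR).
    apply Cg; auto.
    assert (E2 : fill c [IIn g] = fill (ccomp c (Hole [IIn g])) []) by (rewrite fill_ch, app_nil_r; auto).
    rewrite E2. apply Cf.
    + rewrite fill_ch_down. strip_simpl. eapply Der_eqv; [apply (Der_weaken _ _ [IIn g] HLf)|]. apply fill_eqv; esolve.
    + rewrite fill_ch. eapply Der_eqv; [apply HR|]. apply fill_eqv; esolve.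
  -
    destruct HS as [Cf Cg]. destruct PR as [-> ->]. destruct PL as [[HT1|HT1] ->]; subst TL.
    + apply Cf.
      * eapply Der_of'; [apply (HTL (TC [IOut f])); simpl; auto|]; apply eqv_sym, FL.
      * eapply Der_of'; [apply (HTR (TC [IIn f])); simpl; auto|]; apply eqv_sym, FR.
    + apply Cg.
      * eapply Der_of'; [apply (HTL (TC [IOut g])); simpl; auto|]; apply eqv_sym, FL.
      * eapply Der_of'; [apply (HTR (TC [IIn g])); simpl; auto|]; apply eqv_sym, FR.
  -
    destruct HS as [Cf Cg]. destruct PL as [-> ->]. destruct PR as [-> ->].
    assert (S1 : Der (fill (down c) [IOut f])).
    { assert (E2 : fill (down c) [IOut f] = fill (ccomp (down c) (Hole [IOut f])) []) by (rewrite fill_ch, app_nil_r; auto).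
      rewrite E2. apply (IH (S a') b'); [lia| |].
      - rewrite fill_ch_down, down_down. strip_simpl. auto.
      - rewrite fill_ch. eapply Dh_eqv; [apply (HTR (TD [IIn (Imp f g); IOut f])); simpl; auto|].
        simpl. eapply eqv_trans; [|apply eqv_sym, FRd]. apply fill_eqv. simpl. esolve. }
    assert (S2 : Der (fill (down c) [IOut g])).
    { assert (E2 : fill (down c) [IOut g] = fill (ccomp (down c) (Hole [IOut g])) []) by (rewrite fill_ch, app_nil_r; auto).
      rewrite E2. apply Cf.
      - rewrite fill_ch_down, down_down. strip_simpl. auto.
      - rewrite fill_ch. eapply Der_of'; [apply (HTL (TC [IIn f; IOut g])); simpl; auto|].
        simpl. eapply eqv_trans; [|apply eqv_sym, FL]. apply fill_eqv. simpl. esolve. }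
    apply Cg; auto. eapply Der_of'; [apply (HTR (TC [IIn g])); simpl; auto|]; apply eqv_sym, FR.
  -
    destruct HS as [Cf Cg]. destruct PL as [-> ->]. destruct PR as [e [D [-> HZ0]]].
    assert (FR' : forall Y, fill c Y ~~ fill cR (IComp e D :: Y)).
    { intros Y. eapply eqv_trans; [apply FR|]. apply fill_eqv. change (IComp e D :: Y) with ([IComp e D] ++ Y). apply eqv_app; auto. }
    assert (FRd' : forall Y, fill (down c) Y ~~ fill (down cR) (IComp e (strip D) :: Y)).
    { intros Y. eapply eqv_trans; [apply FRd|]. apply fill_eqv. apply strip_eqv in HZ0. strip_simpl.
      change (IComp e (strip D) :: Y) with ([IComp e (strip D)] ++ Y). apply eqv_app; auto. }
    assert (S1 : Der (fill cR [IComp e (IIn g :: D)])).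
    { assert (E2 : fill cR [IComp e (IIn g :: D)] = fill (ccomp cR (Hole [IComp e (IIn g :: D)])) []) by (rewrite fill_ch, app_nil_r; auto).
      rewrite E2. apply (IH (S a') b'); [lia| |].
      - rewrite fill_ch_down. strip_simpl.
        apply Dh_eqv with (fill (down cR) [IOut (Box f g); IComp e (IIn g :: strip D)]); [|apply fill_eqv; esolve].
        apply lift_comp_weak. eapply Dh_eqv; [apply HLd|]. eapply eqv_trans; [apply FRd'|]. apply fill_eqv; esolve.
      - rewrite fill_ch. eapply Dh_eqv; [apply (HTR (TC [IIn (Box f g); IComp e (IIn g :: D)])); simpl; auto|].
        simpl. apply fill_eqv. esolve. }
    assert (S2 : Der (fill (down cR) [IComp e ([IOut g] ++ strip D)])).
    { eapply (absorb f e Cf).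
      - eapply Der_of; apply (HTR (TF [IIn f; IOut e])); simpl; auto.
      - eapply Der_of; apply (HTR (TF [IIn e; IOut f])); simpl; auto.
      - eapply Dh_eqv; [apply (HTL (TC [IComp f [IOut g]])); simpl; auto|]. simpl.
        eapply eqv_trans; [apply eqv_sym, FL|]. eapply eqv_trans; [apply FRd'|]. apply fill_eqv; esolve. }
    apply Der_eqv with (fill (ccomp cR (Down [] e (Hole D))) []).
    2:{ rewrite fill_cde, app_nil_r. apply eqv_sym. eapply eqv_trans; [apply FR'|]. apply fill_eqv; esolve. }
    apply Cg.
    + rewrite fill_cde_down. eapply Der_eqv; [apply S2|]. apply fill_eqv, eqv_comp1. esolve.
    + rewrite fill_cde. eapply Der_eqv; [apply S1|]. apply fill_eqv, eqv_comp1. esolve.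
  -
    destruct HS as [Cf Cg]. destruct PL as [e [D [-> HZ0]]]. destruct PR as [-> ->].
    destruct (US_ccomp _ _ _ H4) as [c1 [c2 [H6 [H7 H8]]]].
    destruct c2 as [W|W q c3]; simpl in H8; [|contradiction].
    destruct (strip_split _ _ _ H8) as [w1 [w2 [HW1 [HW2 HW3]]]].
    assert (HW2' : strip w1 ~~ [IComp e D]) by (eapply eqv_trans; eauto).
    destruct (strip_single_comp _ _ _ HW2') as [D' [O [HO1 [HO2 HD']]]].
    set (cc := ccomp c1 (Hole (O ++ w2))).
    assert (Fc : forall Y, fill c Y ~~ fill cc (IComp e D' :: Y)).
    { intros Y. eapply eqv_trans; [apply ceq_fill; [apply H6|apply eqv_refl]|]. unfold cc. rewrite !fill_ch.
      apply fill_eqv. eapply eqv_trans; [apply eqv_app; [apply HW1|apply eqv_refl]|].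
      eapply eqv_trans; [apply eqv_app; [apply eqv_app; [apply HO1|apply eqv_refl]|apply eqv_refl]|]. esolve. }
    assert (Fcd : forall Y, fill (down cc) Y ~~ fill cL Y).
    { intros Y. unfold cc. rewrite fill_ch_down, strip_app, HO2. simpl.
      eapply eqv_trans; [apply ceq_fill; [apply H7|apply eqv_refl]|].
      eapply eqv_trans; [|apply ceq_fill; [apply ceq_sym, H5|apply eqv_refl]]. rewrite fill_ch.
      apply fill_eqv. apply eqv_app; auto. }
    assert (S1 : Der (fill cc [IComp e ([IIn g] ++ D')])).
    { eapply (absorb f e Cf).
      - eapply Der_of; apply (HTL (TF [IIn f; IOut e])); simpl; auto.
      - eapply Der_of; apply (HTL (TF [IIn e; IOut f])); simpl; auto.
      - eapply Dh_eqv; [apply (HTR (TC [IComp f [IIn g]])); simpl; auto|]. simpl.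
        eapply eqv_trans; [apply eqv_sym, FR|]. eapply eqv_trans; [apply Fc|]. apply fill_eqv; esolve. }
    apply Der_eqv with (fill (ccomp cc (Down [] e (Hole D'))) []).
    2:{ rewrite fill_cde, app_nil_r. apply eqv_sym. apply Fc. }
    apply Cg.
    + rewrite fill_cde_down. eapply Der_of'; [apply (HTL (TC [IComp e (IOut g :: D)])); simpl; auto|].
      simpl. eapply eqv_trans; [|apply eqv_sym, Fcd]. apply fill_eqv, eqv_comp1.
      eapply eqv_trans; [|apply eqv_app_comm]. simpl. apply eqv_cons; auto. apply eqv_sym; auto.
    + rewrite fill_cde. eapply Der_eqv; [apply S1|]. apply fill_eqv, eqv_comp1. esolve.
Qed.

Lemma cut_step xi a b c : SubCut xi -> CutIH xi (a + b) ->
  Dh a (fill (down c) [IOut xi]) -> Dh b (fill c [IIn xi]) -> Der (fill c []).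
Proof.
  intros HS IH HLd HRd.
  inversion HLd as [a' cL TL ZL sL HLr HLs HTL]; subst a.
  destruct (core (down c) [IOut xi] cL ZL (eqv_sym _ _ HLs)) as [[K [H1 H2]]|[[Z1 [h [u [Z2 [c3 [H1 [H2 H3]]]]]]]|[[X1 [h [u [X2 [c3 [H1 [H2 H3]]]]]]]|[a0 [M [X0 [Z0 [E [H1 [H2 [H3 [H4 H5]]]]]]]]]]]].
  - eapply L_K_case; eauto.
  - subst ZL. eapply cut_L_perm_inZ; eauto.
  - destruct X1 as [|? []]; discriminate.
  - destruct (single_eqv _ _ _ H2 H1) as [y [-> [-> Hy]]]. apply ie_out_inv in Hy. subst y.
    inversion HRd as [b' cR TR ZR sR HRr HRs HTR]; subst b.
    destruct (core c [IIn xi] cR ZR (eqv_sym _ _ HRs)) as [[K [H1' H2']]|[[Z1 [h [u [Z2 [c3 [H1' [H2' H3']]]]]]]|[[X1 [h [u [X2 [c3 [H1' [H2' H3']]]]]]]|[a1 [M' [X0' [ZR0 [E1 [H1' [H2' [H3' [H4' H5']]]]]]]]]]]].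
    + eapply cut_R_perm_K; eauto.
    + subst ZR. eapply cut_R_perm_inZ; eauto.
    + destruct X1 as [|? []]; discriminate.
    + destruct (single_eqv _ _ _ H2' H1') as [y [-> [-> Hy]]]. apply ie_in_inv in Hy. subst y.
      apply (prin_combo xi a' b' c cL TL ZL cR TR ZR Z0 ZR0 a0 E a1 E1); auto.
Qed.

Lemma cut_all xi : SubCut xi -> forall m, CutIH xi m.
Proof.
  intros HS m. induction m as [|m IH]; intros a b c Hlt HL HR; [lia|].
  destruct (PeanoNat.Nat.lt_ge_cases (a + b) m) as [Hl|Hge].
  - eapply IH; eauto.
  - assert (a + b = m) by lia. subst m. eapply cut_step; eauto.
Qed.

Theorem cut_adm xi : CutAdm xi.
Proof.
  induction xi; intros c [a HL] [b HR];
  refine (cut_all _ _ (S (a + b)) a b c _ HL HR); try lia; simpl; try split; auto.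
Qed.

Lemma intck_lrule P C : intck_rule P C <-> exists c T Z, lrule T Z /\ C = fill c Z /\ P = map (inst c) T.
Proof.
  split.
  - intros H; inversion H; subst.
    + exists c, [], [IIn (Var p); IOut (Var p)]; repeat split; constructor.
    + exists c, [], [IIn Bot]; repeat split; constructor.
    + eexists c, _, _; split; [apply l_andL|split; reflexivity].
    + eexists c, _, _; split; [apply l_andR|split; reflexivity].
    + eexists c, _, _; split; [apply l_orL|split; reflexivity].
    + eexists c, _, _; split; [apply l_orR1|split; reflexivity].
    + eexists c, _, _; split; [apply l_orR2|split; reflexivity].
    + eexists c, _, _; split; [apply l_impL|split; reflexivity].
    + eexists c, _, _; split; [apply l_impR|split; reflexivity].
    + eexists c, _, _; split; [apply l_boxL|split; reflexivity].
    + eexists c, _, _; split; [apply l_boxR|split; reflexivity].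
    + eexists c, _, _; split; [apply l_diaL|split; reflexivity].
    + eexists c, _, _; split; [apply l_diaR|split; reflexivity].
  - intros [c [T [Z [HL [-> ->]]]]]. inversion HL; subst; simpl; constructor.
Qed.

Lemma cut_free_of_cut G : derivable intck_cut_rule G -> Der G.
Proof.
  induction 1 as [prems concl HR Hn Hpn Hd IH|s t He Hd IH].
  - destruct HR as [HR|HR].
    + apply intck_lrule in HR as [c [T [Z [HL [-> ->]]]]].
      apply (Der_rule _ T); auto. intros t Ht. apply IH. apply in_map; auto.
    + inversion HR; subst. apply (cut_adm xi c); apply IH; simpl; auto.
  - eapply Der_eqv; eauto.
Qed.

Lemma prem_nested T Z c : lrule T Z -> nested (fill c Z) -> forall t, In t T -> nested (inst c t).
Proof.
  unfold nested. intros HL Hn t Ht. rewrite nouts_fill in Hn.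
  inversion HL; subst; simpl in Ht;
  repeat match goal with H : _ \/ _ |- _ => destruct H as [H|H] | H : False |- _ => contradiction end;
  subst; unfold inst; rewrite ?nouts_fill, ?nc_down; nouts_simpl; nouts_simpl; rewrite ?nouts_app in *; nouts_simpl;
  rewrite ?nouts_cons, ?nouts_single, ?nouts_item_in, ?nouts_item_out, ?nouts_nil, ?nouts_item_comp in Hn; lia.
Qed.

Lemma Dh_derivable n s : Dh n s -> nested s -> derivable intck_rule s.
Proof.
  induction 1 as [n c T Z s HL Hs HT IH]. intros Hn.
  assert (Hn' : nested (fill c Z)) by (unfold nested in *; rewrite (nouts_eqv _ _ Hs); auto).
  apply der_equiv with (fill c Z); auto.
  apply der_rule with (map (inst c) T).
  - apply intck_lrule. exists c, T, Z; auto.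
  - auto.
  - intros p Hp. apply in_map_iff in Hp as [t [<- Ht]]. eapply prem_nested; eauto.
  - intros p Hp. apply in_map_iff in Hp as [t [<- Ht]]. apply IH; auto. eapply prem_nested; eauto.
Qed.

Theorem theorem2 (G : seqnt) :
  nested G -> derivable intck_cut_rule G -> derivable intck_rule G.
Proof.
  intros Hn Hd. destruct (cut_free_of_cut _ Hd) as [n Hn'].
  eapply Dh_derivable; eauto.
Qed.
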